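(* Assume $S\neq\emptyset$ and let $k\ge\max(1,k_1,\dots,k_m)$. If $\mathcal{Q}_k(\tilde G)$ is closed in $\mathbb{R}[\tilde X]_{2k}$, then $\widetilde{\mathrm{TH}}_k(\tilde G)=\overline{\Omega_k(\tilde G)}$.
   Context: $X=(X_1,\dots,X_n)$, $\tilde X=(X_0,X_1,\dots,X_n)$, $\|\cdot\|_2$ Euclidean norm; $\mathbb{R}[\tilde X]_{2k}$ is the space of polynomials of degree at most $2k$. For $f\in\mathbb{R}[X]$ of degree $d$, its homogenization is $\tilde f(\tilde X)=X_0^df(X/X_0)\in\mathbb{R}[\tilde X]$. Fix $g_1,\dots,g_m\in\mathbb{R}[X]$ and $S=\{x\in\mathbb{R}^n:g_1(x)\ge0,\dots,g_m(x)\ge0\}$. For a finite set $H=\{h_1,\dots,h_r\}$ of polynomials, the $k$-th quadratic module is $\mathcal{Q}_k(H)=\{\sum_{j=0}^r\sigma_jh_j:h_0=1,\ \sigma_j\text{ sums of squares of polynomials},\ \deg(\sigma_jh_j)\le2k\}$. Let $\tilde G=\{\tilde g_1,\dots,\tilde g_m,X_0,\|\tilde X\|_2^2-1,1-\|\tilde X\|_2^2\}$. Let $\mathcal{P}[\tilde X]_1$ be the set of linear forms (homogeneous of degree one) in $\tilde X$ together with $0$. The modified theta body is $\widetilde{\mathrm{TH}}_k(\tilde G)=\{x\in\mathbb{R}^n:\tilde l(1,x)\ge0\ \forall\tilde l\in\mathcal{Q}_k(\tilde G)\cap\mathcal{P}[\tilde X]_1\}$. Moments: for $y=(y_\alpha)_{\alpha\in\mathbb{N}^{n+1},|\alpha|\le2k}$,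 the Riesz functional is $L_y(\sum_\alpha q_\alpha\tilde X^\alpha)=\sum_\alpha q_\alpha y_\alpha$; the moment matrix $M_k(y)$ is indexed by $\alpha,\beta\in\mathbb{N}^{n+1}$, $|\alpha|,|\beta|\le k$, with entries $y_{\alpha+\beta}$; for $p=\sum_\beta p_\beta\tilde X^\beta$ with $d_p=\lceil\deg p/2\rceil\le k$, the localizing matrix $M_{k-d_p}(py)$ is indexed by $|\alpha|,|\gamma|\le k-d_p$ with entries $\sum_\beta p_\beta y_{\alpha+\gamma+\beta}$. With $k_j=\lceil\deg g_j/2\rceil$, the modified Lasserre relaxation is $\Omega_k(\tilde G)=\{x\in\mathbb{R}^n:\exists y=(y_\alpha)_{|\alpha|\le2k}\text{ with }L_y(X_0)=1,\ L_y(X_i)=x_i\ (i=1,\dots,n),\ M_{k-1}(X_0y)\succeq0,\ M_{k-1}((\|\tilde X\|_2^2-1)y)=0,\ M_k(y)\succeq0,\ M_{k-k_j}(\tilde g_jy)\succeq0\ (j=1,\dots,m)\}$. Overline denotes closure. *)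

(* Defs.v *)
From Stdlib Require Import Reals List Arith.
Import ListNotations.
Open Scope R_scope.

(** Multi-indices (exponent vectors) and polynomials as finite lists of terms.
    A polynomial is identified with its coefficient function [coef]. *)
Definition mono := list nat.
Definition mpoly := list (mono * R).

Fixpoint rsum {A : Type} (f : A -> R) (l : list A) : R :=
  match l with [] => 0 | a :: l' => f a + rsum f l' end.

Definition mdeg (a : mono) : nat := fold_right Nat.add 0%nat a.

Fixpoint vadd (a b : mono) : mono :=
  match a, b with
  | x :: a', y :: b' => (x + y)%nat :: vadd a' b'
  | [], _ => b
  | _, [] => a
  end.

Definition coef (p : mpoly) (a : mono) : R :=
  rsum (fun t => if list_eq_dec Nat.eq_dec (fst t) a then snd t else 0) p.

Definition wf (N : nat) (p : mpoly) : Prop := Forall (fun t => length (fst t) = N) p.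

Definition peq (p q : mpoly) : Prop := forall a, coef p a = coef q a.

Definition deg_le (d : nat) (p : mpoly) : Prop :=
  forall a, coef p a <> 0 -> (mdeg a <= d)%nat.

(** the degree of p (0 for the zero polynomial) *)
Definition pdeg (p : mpoly) : nat :=
  fold_right Nat.max 0%nat
    (map (fun t => if Req_EM_T (coef p (fst t)) 0 then 0%nat else mdeg (fst t)) p).

Definition halfceil (d : nat) : nat := ((d + 1) / 2)%nat.

Definition pmul (p q : mpoly) : mpoly :=
  flat_map (fun t => map (fun s => (vadd (fst t) (fst s), snd t * snd s)) q) p.

Definition pscale (c : R) (p : mpoly) : mpoly := map (fun t => (fst t, c * snd t)) p.

Definition zeros (N : nat) : mono := repeat 0%nat N.
Definition pone (N : nat) : mpoly := [(zeros N, 1)].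
Definition evec (N i : nat) : mono :=
  map (fun j => if Nat.eqb j i then 1%nat else 0%nat) (seq 0 N).
(** the variable X_i (among N variables X_0..X_{N-1}) *)
Definition pvar (N i : nat) : mpoly := [(evec N i, 1)].

Fixpoint meval (a : mono) (v : list R) : R :=
  match a, v with
  | e :: a', x :: v' => x ^ e * meval a' v'
  | _, _ => 1
  end.
Definition peval (p : mpoly) (v : list R) : R := rsum (fun t => snd t * meval (fst t) v) p.

(** homogenization X_0^d f(X/X_0), d = deg f *)
Definition homog (f : mpoly) : mpoly :=
  map (fun t => ((pdeg f - mdeg (fst t))%nat :: fst t, snd t)) f.

(** ||X~||_2^2 - 1 in N variables *)
Definition nrm1 (N : nat) : mpoly :=
  map (fun i => (map (fun j => if Nat.eqb j i then 2%nat else 0%nat) (seq 0 N), 1)) (seq 0 N)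
  ++ [(zeros N, -1)].

Definition Gtilde (n : nat) (gs : list mpoly) : list mpoly :=
  map homog gs ++ [pvar (S n) 0; nrm1 (S n); pscale (-1) (nrm1 (S n))].

Definition is_sos (N : nat) (s : mpoly) : Prop :=
  exists qs : list mpoly, Forall (wf N) qs /\ peq s (flat_map (fun q => pmul q q) qs).

(** k-th quadratic module Q_k(H) (h_0 = 1) *)
Definition in_Qk (N k : nat) (H : list mpoly) (f : mpoly) : Prop :=
  exists (s0 : mpoly) (ss : list mpoly),
    is_sos N s0 /\ deg_le (2 * k) s0 /\
    Forall (is_sos N) ss /\
    Forall2 (fun s h => deg_le (2 * k) (pmul s h)) ss H /\
    peq f (s0 ++ concat (map (fun sh => pmul (fst sh) (snd sh)) (combine ss H))).

(** Q_k(H) closed in R[X]_{2k} (finite-dimensional, coefficient topology;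
    stated sequentially: coefficientwise limits of elements stay inside) *)
Definition Qk_closed (N k : nat) (H : list mpoly) : Prop :=
  forall (f : nat -> mpoly) (p : mpoly),
    (forall j, in_Qk N k H (f j)) ->
    (forall a, Un_cv (fun j => coef (f j) a) (coef p a)) ->
    in_Qk N k H p.

(** linear forms in N variables (together with 0) *)
Definition is_linform (N : nat) (l : mpoly) : Prop :=
  forall a, coef l a <> 0 -> length a = N /\ mdeg a = 1%nat.

(** modified theta body; points of R^n are lists of length n *)
Definition in_TH (n k : nat) (gs : list mpoly) (x : list R) : Prop :=
  length x = n /\
  forall l, in_Qk (S n) k (Gtilde n gs) l -> is_linform (S n) l -> 0 <= peval l (1 :: x).

Fixpoint monos (N d : nat) : list mono :=
  match N with
  | O => [[]]
  | S N' => flat_map (fun a => map (cons a) (monos N' (d - a))) (seq 0 (S d))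
  end.

Definition Ly (y : mono -> R) (p : mpoly) : R := rsum (fun t => snd t * y (fst t)) p.
Definition momat (y : mono -> R) (a b : mono) : R := y (vadd a b).
Definition locmat (p : mpoly) (y : mono -> R) (a b : mono) : R :=
  rsum (fun t => snd t * y (vadd (vadd a b) (fst t))) p.

Definition psd (idx : list mono) (M : mono -> mono -> R) : Prop :=
  forall v : mono -> R, 0 <= rsum (fun a => rsum (fun b => v a * M a b * v b) idx) idx.

Definition in_Omega (n k : nat) (gs : list mpoly) (x : list R) : Prop :=
  length x = n /\
  exists y : mono -> R,
    Ly y (pvar (S n) 0) = 1 /\
    (forall i, (i < n)%nat -> Ly y (pvar (S n) (S i)) = nth i x 0) /\
    psd (monos (S n) (k - 1)) (locmat (pvar (S n) 0) y) /\
    (forall a b, In a (monos (S n) (k - 1)) -> In b (monos (S n) (k - 1)) ->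
       locmat (nrm1 (S n)) y a b = 0) /\
    psd (monos (S n) k) (momat y) /\
    Forall (fun g => psd (monos (S n) (k - halfceil (pdeg g))) (locmat (homog g) y)) gs.

Definition dist (x y : list R) : R :=
  sqrt (rsum (fun p => (fst p - snd p) ^ 2) (combine x y)).

Definition in_closure (n : nat) (A : list R -> Prop) (x : list R) : Prop :=
  length x = n /\
  forall eps, 0 < eps -> exists z, A z /\ length z = n /\ dist x z < eps.

Definition in_S (n : nat) (gs : list mpoly) (x : list R) : Prop :=
  length x = n /\ Forall (fun g => 0 <= peval g x) gs.

(* Main.v *)
Require Import Defs.
From Stdlib Require Import Reals List Arith Lra Lia Permutation Classical ClassicalEpsilon.
Import ListNotations.
Open Scope R_scope.

Notation mdec := (list_eq_dec Nat.eq_dec).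

Lemma rsum_app {A} (f : A -> R) l1 l2 : rsum f (l1 ++ l2) = rsum f l1 + rsum f l2.
Proof. induction l1; simpl; [lra|rewrite IHl1; lra]. Qed.

Lemma rsum_map {A B} (f : B -> R) (g : A -> B) l : rsum f (map g l) = rsum (fun x => f (g x)) l.
Proof. induction l; simpl; congruence. Qed.

Lemma rsum_flat_map {A B} (f : B -> R) (g : A -> list B) l :
  rsum f (flat_map g l) = rsum (fun x => rsum f (g x)) l.
Proof. induction l; simpl; auto. rewrite rsum_app, IHl; auto. Qed.

Lemma rsum_concat {A} (f : A -> R) l : rsum f (concat l) = rsum (fun x => rsum f x) l.
Proof. induction l; simpl; auto. rewrite rsum_app, IHl; auto. Qed.

Lemma rsum_ext {A} (f g : A -> R) l : (forall x, In x l -> f x = g x) -> rsum f l = rsum g l.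
Proof. induction l; simpl; intros; auto. rewrite H, IHl; auto. Qed.

Lemma rsum_plus {A} (f g : A -> R) l : rsum (fun x => f x + g x) l = rsum f l + rsum g l.
Proof. induction l; simpl; [lra|rewrite IHl; lra]. Qed.

Lemma rsum_minus {A} (f g : A -> R) l : rsum (fun x => f x - g x) l = rsum f l - rsum g l.
Proof. induction l; simpl; [lra|rewrite IHl; lra]. Qed.

Lemma rsum_scal {A} (c : R) (f : A -> R) l : rsum (fun x => c * f x) l = c * rsum f l.
Proof. induction l; simpl; [lra|rewrite IHl; lra]. Qed.

Lemma rsum_scalr {A} (c : R) (f : A -> R) l : rsum (fun x => f x * c) l = rsum f l * c.
Proof. induction l; simpl; [lra|rewrite IHl; lra]. Qed.

Lemma rsum_zero {A} (f : A -> R) l : (forall x, In x l -> f x = 0) -> rsum f l = 0.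
Proof. induction l; simpl; intros; auto. rewrite H, IHl; auto. lra. Qed.

Lemma rsum_nonneg {A} (f : A -> R) l : (forall x, In x l -> 0 <= f x) -> 0 <= rsum f l.
Proof. induction l; simpl; intros; [lra|]. pose proof (H a (or_introl eq_refl)).
  assert (0 <= rsum f l) by (apply IHl; auto). lra. Qed.

Lemma rsum_le {A} (f g : A -> R) l : (forall x, In x l -> f x <= g x) -> rsum f l <= rsum g l.
Proof. induction l; simpl; intros; [lra|]. specialize (H a (or_introl eq_refl)) as H1.
  assert (rsum f l <= rsum g l) by (apply IHl; auto). lra. Qed.

Lemma rsum_perm {A} (f : A -> R) l l' : Permutation l l' -> rsum f l = rsum f l'.
Proof. induction 1; simpl; lra. Qed.

Lemma rsum_swap {A B} (F : A -> B -> R) la lb :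
  rsum (fun a => rsum (fun b => F a b) lb) la = rsum (fun b => rsum (fun a => F a b) la) lb.
Proof.
  induction la; simpl.
  - rewrite rsum_zero; auto.
  - rewrite IHla, <- rsum_plus. auto.
Qed.

Lemma rsum_term_le {A} (f : A -> R) l x : (forall y, In y l -> 0 <= f y) -> In x l -> f x <= rsum f l.
Proof.
  induction l; simpl; intros H Hx; [contradiction|].
  destruct Hx as [<-|Hx].
  - assert (0 <= rsum f l) by (apply rsum_nonneg; auto). lra.
  - assert (0 <= f a) by auto. assert (f x <= rsum f l) by (apply IHl; auto). lra.
Qed.

Lemma rsum_filter {A} (P : A -> bool) (f : A -> R) l :
  rsum f l = rsum f (filter P l) + rsum f (filter (fun x => negb (P x)) l).
Proof. induction l; simpl; [lra|]. destruct (P a); simpl; rewrite IHl; lra. Qed.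

Lemma rsum_indicator (b : mono) (f : mono -> R) A : NoDup A -> In b A ->
  rsum (fun a => if mdec b a then f a else 0) A = f b.
Proof.
  induction 1; simpl; intros Hb; [contradiction|].
  destruct (mdec b x).
  - subst. rewrite rsum_zero; [lra|]. intros y Hy. destruct (mdec x y); [subst; contradiction|auto].
  - destruct Hb; [congruence|]. rewrite IHNoDup; auto. lra.
Qed.

Lemma sum_sub (g : mono -> R) A A' : NoDup A -> NoDup A' -> incl A A' ->
  (forall a, In a A' -> ~ In a A -> g a = 0) -> rsum g A' = rsum g A.
Proof.
  intros HA HA' Hinc Hz.
  set (P := fun a => if in_dec mdec a A then true else false).
  rewrite (rsum_filter P).
  rewrite Rplus_comm. rewrite rsum_zero.
  2:{ intros x Hx. apply filter_In in Hx as [H1 H2]. unfold P in H2.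
      destruct (in_dec mdec x A); simpl in H2; [discriminate|]. auto. }
  rewrite Rplus_0_l. apply rsum_perm. apply NoDup_Permutation.
  - apply NoDup_filter; auto.
  - auto.
  - intros x; split; intros Hx.
    + apply filter_In in Hx as [H1 H2]. unfold P in H2. destruct (in_dec mdec x A); auto; discriminate.
    + apply filter_In. split; auto. unfold P. destruct (in_dec mdec x A); auto.
Qed.

Lemma coef_app p q a : coef (p ++ q) a = coef p a + coef q a.
Proof. unfold coef. apply rsum_app. Qed.

Lemma coef_nil a : coef [] a = 0.
Proof. reflexivity. Qed.

Lemma coef_cons t p a : coef (t :: p) a = (if mdec (fst t) a then snd t else 0) + coef p a.
Proof. reflexivity. Qed.

Lemma coef_nz_in p a : coef p a <> 0 -> In a (map fst p).
Proof.
  induction p; simpl; intros H. { unfold coef in H; simpl in H; lra. }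
  rewrite coef_cons in H. destruct (mdec (fst a0) a); auto.
  right. apply IHp. lra.
Qed.

Lemma TS0 (p : mpoly) (G : mono -> R) (A : list mono) : NoDup A ->
  (forall t, In t p -> In (fst t) A) ->
  rsum (fun t => snd t * G (fst t)) p = rsum (fun a => coef p a * G a) A.
Proof.
  intros HA. induction p; simpl; intros Hin.
  - rewrite rsum_zero; auto. intros; rewrite coef_nil; lra.
  - rewrite IHp by auto.
    rewrite (rsum_ext (fun a0 => coef (a :: p) a0 * G a0)
       (fun a0 => (if mdec (fst a) a0 then snd a * G a0 else 0) + coef p a0 * G a0)).
    2:{ intros x _. rewrite coef_cons. destruct (mdec (fst a) x); lra. }
    rewrite rsum_plus. rewrite (rsum_indicator (fst a) (fun a0 => snd a * G a0)); auto.
Qed.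

Lemma TS (p : mpoly) (G : mono -> R) (A : list mono) : NoDup A ->
  (forall a, coef p a <> 0 -> In a A) ->
  rsum (fun t => snd t * G (fst t)) p = rsum (fun a => coef p a * G a) A.
Proof.
  intros HA Hs.
  set (A' := nodup mdec (A ++ map fst p)).
  rewrite (TS0 p G A').
  2: apply NoDup_nodup.
  2:{ intros t Ht. apply nodup_In. apply in_or_app; right. apply in_map; auto. }
  apply sum_sub; auto. apply NoDup_nodup.
  intros x Hx. apply nodup_In. apply in_or_app; auto.
  intros a _ Ha. destruct (Req_dec (coef p a) 0) as [E|E]; [rewrite E; lra|].
  exfalso; auto.
Qed.

Lemma mdeg_cons x a : mdeg (x :: a) = (x + mdeg a)%nat.
Proof. reflexivity. Qed.

Lemma mdeg_vadd a b : mdeg (vadd a b) = (mdeg a + mdeg b)%nat.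
Proof.
  revert b; induction a; intros b; destruct b; simpl; try reflexivity.
  all: unfold mdeg in *; simpl in *; try lia.
  rewrite IHa. lia.
Qed.

Lemma vadd_comm a b : vadd a b = vadd b a.
Proof. revert b; induction a; destruct b; simpl; auto. f_equal; auto. lia. Qed.

Lemma vadd_length a b : length a = length b -> length (vadd a b) = length a.
Proof. revert b; induction a; destruct b; simpl; intros; auto; try discriminate. Qed.

Lemma vadd_assoc a b c : vadd (vadd a b) c = vadd a (vadd b c).
Proof. revert b c; induction a; destruct b, c; simpl; auto. f_equal; auto. lia. Qed.

Lemma NoDup_map_inj {A B} (f : A -> B) l : (forall x y, f x = f y -> x = y) -> NoDup l -> NoDup (map f l).
Proof.
  intros Hf; induction 1; simpl; constructor; auto.
  intros Hin. apply in_map_iff in Hin as [z [E Hz]]. apply Hf in E; subst; auto.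
Qed.

Lemma monos_In N d a : In a (monos N d) <-> length a = N /\ (mdeg a <= d)%nat.
Proof.
  revert d a; induction N; intros d a.
  - simpl. split. intros [<-|[]]; split; simpl; auto; unfold mdeg; simpl; lia.
    intros [H1 H2]. destruct a; simpl in *; auto; discriminate.
  - change (monos (S N) d) with (flat_map (fun x => map (cons x) (monos N (d - x))) (seq 0 (S d))).
    rewrite in_flat_map. split.
    + intros [x [Hx Ha]]. apply in_map_iff in Ha as [a' [<- Ha']]. apply IHN in Ha' as [H1 H2].
      apply in_seq in Hx. rewrite mdeg_cons. simpl. split; [auto|lia].
    + intros [H1 H2]. destruct a as [|x a']; simpl in H1; [discriminate|].
      rewrite mdeg_cons in H2. exists x. split. apply in_seq; lia.
      apply in_map. apply IHN. split; [lia|lia].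
Qed.

Lemma NoDup_monos N d : NoDup (monos N d).
Proof.
  revert d; induction N; intros d. simpl. constructor; [auto|constructor].
  change (monos (S N) d) with (flat_map (fun x => map (cons x) (monos N (d - x))) (seq 0 (S d))).
  generalize (seq_NoDup (S d) 0). generalize (seq 0 (S d)). intros l Hl.
  induction Hl; simpl. constructor.
  apply NoDup_app.
  - apply NoDup_map_inj; auto. intros u v E; injection E; auto.
  - auto.
  - intros a Ha Hb. apply in_map_iff in Ha as [u [<- _]].
    apply in_flat_map in Hb as [z [Hz Hb]]. apply in_map_iff in Hb as [v [E _]].
    injection E; intros; subst; auto.
Qed.

Fixpoint lexlt (a b : mono) : Prop :=
  match a, b with
  | x :: a', y :: b' => (x < y)%nat \/ (x = y /\ lexlt a' b')
  | _, _ => False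
  end.

Lemma lexlt_irrefl a : ~ lexlt a a.
Proof. induction a; simpl; auto. intros [H|[_ H]]; [lia|auto]. Qed.

Lemma lexlt_trans a b c : lexlt a b -> lexlt b c -> lexlt a c.
Proof.
  revert b c; induction a; destruct b, c; simpl; auto; try tauto.
  intros [H|[E H]] [H'|[E' H']]; subst; try (left; lia). right; split; eauto.
Qed.

Lemma lexlt_tri a b : length a = length b -> lexlt a b \/ a = b \/ lexlt b a.
Proof.
  revert b; induction a; destruct b; simpl; intros; auto; try discriminate.
  destruct (lt_eq_lt_dec a n) as [[H1|H1]|H1].
  - auto.
  - subst. destruct (IHa b) as [H2|[H2|H2]]; auto. subst; auto.
  - right; right; left; lia.
Qed.

Lemma lexlt_add a b c : length a = length c -> length b = length c -> lexlt a b -> lexlt (vadd a c) (vadd b c).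
Proof.
  revert b c; induction a; destruct b, c; simpl; intros H H0 H1; auto; try discriminate; try tauto.
  destruct H1 as [H1|[E H1]]; [left; lia|]. subst. right; split; auto.
Qed.

Definition grlt (a b : mono) : Prop := (mdeg a < mdeg b)%nat \/ (mdeg a = mdeg b /\ lexlt a b).
Definition grle (a b : mono) : Prop := grlt a b \/ a = b.

Lemma grlt_irrefl a : ~ grlt a a.
Proof. intros [H|[_ H]]; [lia|]. eapply lexlt_irrefl; eauto. Qed.

Lemma grlt_trans a b c : grlt a b -> grlt b c -> grlt a c.
Proof.
  unfold grlt; intros [H|[E H]] [H'|[E' H']]; try (left; lia). right; split; [lia|]. eapply lexlt_trans; eauto.
Qed.

Lemma grlt_le_trans a b c : grlt a b -> grle b c -> grlt a c.
Proof. intros H [H'|<-]; auto. eapply grlt_trans; eauto. Qed.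

Lemma grle_trans a b c : grle a b -> grle b c -> grle a c.
Proof. intros [H|<-] H'; auto. left; eapply grlt_le_trans; eauto. Qed.

Lemma grlt_tri a b : length a = length b -> grlt a b \/ a = b \/ grlt b a.
Proof.
  intros Hl. unfold grlt. destruct (lt_eq_lt_dec (mdeg a) (mdeg b)) as [[H|H]|H]; auto.
  destruct (lexlt_tri a b Hl) as [H1|[H1|H1]]; auto.
Qed.

Lemma grlt_add a b c : length a = length c -> length b = length c -> grlt a b -> grlt (vadd a c) (vadd b c).
Proof.
  unfold grlt; rewrite !mdeg_vadd. intros H1 H2 [H|[E H]]; [left; lia|right; split; [lia|]].
  apply lexlt_add; auto.
Qed.

Lemma grle_add a b c : length a = length c -> length b = length c -> grle a b -> grle (vadd a c) (vadd b c).
Proof. intros H1 H2 [H|<-]; [left; apply grlt_add; auto|right; auto]. Qed.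

Lemma grle_add2 a b c d N : length a = N -> length b = N -> length c = N -> length d = N ->
  grle a b -> grle c d -> grle (vadd a c) (vadd b d).
Proof.
  intros. eapply grle_trans. apply grle_add; [| |eauto]; congruence.
  rewrite (vadd_comm b c), (vadd_comm b d). apply grle_add; [congruence|congruence|auto].
Qed.

Lemma grle_key a b m m' N : length a = N -> length b = N -> length m = N -> length m' = N ->
  grle a m -> grle b m' -> vadd a b = vadd m m' -> a = m /\ b = m'.
Proof.
  intros La Lb Lm Lm' Ha Hb E.
  destruct Ha as [Ha|Ha]; destruct Hb as [Hb|Hb]; auto; exfalso.
  - assert (grlt (vadd a b) (vadd m b)) by (apply grlt_add; congruence).
    assert (grlt (vadd b m) (vadd m' m)) by (apply grlt_add; congruence).
    rewrite (vadd_comm b m), (vadd_comm m' m) in H0.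
    apply (grlt_irrefl (vadd a b)). rewrite E at 2. eapply grlt_trans; eauto.
  - rewrite Hb in E. assert (grlt (vadd a m') (vadd m m')) by (apply grlt_add; congruence).
    rewrite E in H. eapply grlt_irrefl; eauto.
  - rewrite Ha in E. assert (grlt (vadd b m) (vadd m' m)) by (apply grlt_add; congruence).
    rewrite (vadd_comm b m), (vadd_comm m' m), E in H. eapply grlt_irrefl; eauto.
Qed.

Lemma grle_max (L : list mono) N : L <> [] -> (forall a, In a L -> length a = N) ->
  exists m, In m L /\ forall a, In a L -> grle a m.
Proof.
  induction L as [|x L IH]; intros Hne HL; [congruence|].
  destruct L as [|y L'].
  - exists x. split; [left; auto|]. intros a [<-|[]]; right; auto.
  - destruct IH as [m [Hm Hmax]]. discriminate. intros; apply HL; right; auto.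
    destruct (grlt_tri x m) as [H|[H|H]].
    + rewrite (HL x), (HL m); simpl; auto.
    + exists m; split; [right; auto|]. intros a [<-|Ha]; [left; auto|auto].
    + exists m; split; [right; auto|]. intros a [<-|Ha]; [right; auto|auto].
    + exists x; split; [left; auto|]. intros a [<-|Ha]; [right; auto|].
      left. eapply grlt_le_trans; [|right; eauto]. destruct (Hmax a Ha); [eapply grlt_trans; eauto|subst; auto].
Qed.

Definition indb (b : bool) : R := if b then 1 else 0.
Definition eqm (a b : mono) : bool := if mdec a b then true else false.

Definition supp_len (N : nat) (p : mpoly) : Prop := forall a, coef p a <> 0 -> length a = N.
Definition cover (p : mpoly) : list mono := nodup mdec (map fst p).

Lemma cover_NoDup p : NoDup (cover p).
Proof. apply NoDup_nodup. Qed.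
Lemma cover_supp p a : coef p a <> 0 -> In a (cover p).
Proof. intros H; apply nodup_In, coef_nz_in; auto. Qed.

Lemma rsum_nz {A} (f : A -> R) l : rsum f l <> 0 -> exists x, In x l /\ f x <> 0.
Proof.
  intros H. apply NNPP; intros C. apply H. apply rsum_zero. intros x Hx.
  apply NNPP; intros C'. apply C; eauto.
Qed.

Lemma coef_pmul_raw p r c : coef (pmul p r) c =
  rsum (fun t => snd t * rsum (fun s => snd s * indb (eqm (vadd (fst t) (fst s)) c)) r) p.
Proof.
  unfold coef, pmul. rewrite rsum_flat_map. apply rsum_ext; intros t _.
  rewrite rsum_map, <- rsum_scal. apply rsum_ext; intros s _. simpl.
  unfold indb, eqm. destruct (mdec (vadd (fst t) (fst s)) c); lra.
Qed.

Lemma coef_pmul p r c A B : NoDup A -> NoDup B ->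
  (forall a, coef p a <> 0 -> In a A) -> (forall b, coef r b <> 0 -> In b B) ->
  coef (pmul p r) c = rsum (fun a => coef p a * rsum (fun b => coef r b * indb (eqm (vadd a b) c)) B) A.
Proof.
  intros HA HB Hp Hr. rewrite coef_pmul_raw.
  rewrite (rsum_ext _ (fun t => snd t * (fun a => rsum (fun b => coef r b * indb (eqm (vadd a b) c)) B) (fst t))).
  - apply (TS p (fun a => rsum (fun b => coef r b * indb (eqm (vadd a b) c)) B) A); auto.
  - intros t _. f_equal. apply (TS r (fun b => indb (eqm (vadd (fst t) b) c))); auto.
Qed.

Lemma coef_pmul_nz p r c : coef (pmul p r) c <> 0 ->
  exists a b, coef p a <> 0 /\ coef r b <> 0 /\ vadd a b = c.
Proof.
  rewrite (coef_pmul p r c (cover p) (cover r)); try apply cover_NoDup; try apply cover_supp.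
  intros H. apply rsum_nz in H as [a [_ Ha]].
  assert (coef p a <> 0) by (intros E; rewrite E in Ha; lra).
  assert (rsum (fun b => coef r b * indb (eqm (vadd a b) c)) (cover r) <> 0) by (intros E; rewrite E in Ha; lra).
  apply rsum_nz in H0 as [b [_ Hb]]. exists a, b.
  unfold indb, eqm in Hb. destruct (mdec (vadd a b) c); split; auto; split; auto; lra.
Qed.

Lemma peq_pmul s s' h : peq s s' -> peq (pmul s h) (pmul s' h).
Proof.
  intros E c. rewrite !coef_pmul_raw.
  set (A := nodup mdec (map fst s ++ map fst s')).
  assert (NoDup A) by apply NoDup_nodup.
  set (G := fun a => rsum (fun s0 => snd s0 * indb (eqm (vadd a (fst s0)) c)) h).
  change (rsum (fun t => snd t * G (fst t)) s = rsum (fun t => snd t * G (fst t)) s').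
  rewrite (TS s G A), (TS s' G A); auto.
  - apply rsum_ext; intros a _. rewrite E; auto.
  - intros a Ha. apply nodup_In, in_or_app; right. apply coef_nz_in; auto.
  - intros a Ha. apply nodup_In, in_or_app; left. apply coef_nz_in; auto.
Qed.

Lemma Ly_peq y p q : peq p q -> Ly y p = Ly y q.
Proof.
  intros E. unfold Ly.
  set (A := nodup mdec (map fst p ++ map fst q)).
  assert (NoDup A) by apply NoDup_nodup.
  rewrite (TS p y A), (TS q y A); auto.
  - apply rsum_ext; intros a _. rewrite E; auto.
  - intros a Ha. apply nodup_In, in_or_app; right. apply coef_nz_in; auto.
  - intros a Ha. apply nodup_In, in_or_app; left. apply coef_nz_in; auto.
Qed.

Lemma Ly_app y p q : Ly y (p ++ q) = Ly y p + Ly y q.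
Proof. unfold Ly; apply rsum_app. Qed.

Lemma Ly_pmul y p r : Ly y (pmul p r) = rsum (fun t => snd t * rsum (fun s => snd s * y (vadd (fst t) (fst s))) r) p.
Proof.
  unfold Ly, pmul. rewrite rsum_flat_map. apply rsum_ext; intros t _.
  rewrite rsum_map, <- rsum_scal. apply rsum_ext; intros s _. simpl. lra.
Qed.

Lemma Ly_pmul3 y q h : Ly y (pmul (pmul q q) h) =
  rsum (fun t => snd t * rsum (fun t' => snd t' * locmat h y (fst t) (fst t')) q) q.
Proof.
  rewrite Ly_pmul. unfold pmul at 1. rewrite rsum_flat_map. apply rsum_ext; intros t _.
  rewrite rsum_map, <- rsum_scal. apply rsum_ext; intros t' _. simpl.
  unfold locmat. rewrite <- !rsum_scal. apply rsum_ext; intros s _. lra.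
Qed.

Lemma Ly_pmul2 y q : Ly y (pmul q q) =
  rsum (fun t => snd t * rsum (fun t' => snd t' * momat y (fst t) (fst t')) q) q.
Proof. rewrite Ly_pmul. reflexivity. Qed.

Lemma Ly_flat_map {A} y (g : A -> mpoly) l : Ly y (flat_map g l) = rsum (fun x => Ly y (g x)) l.
Proof. unfold Ly; apply rsum_flat_map. Qed.

Lemma coef_flat_map {A} (g : A -> mpoly) l c : coef (flat_map g l) c = rsum (fun x => coef (g x) c) l.
Proof. unfold coef; apply rsum_flat_map. Qed.

Lemma pmul_flat_map {A} (g : A -> mpoly) l h : pmul (flat_map g l) h = flat_map (fun x => pmul (g x) h) l.
Proof. unfold pmul. induction l; simpl; auto. rewrite flat_map_app, IHl; auto. Qed.

Lemma rsum2_point (F : mono -> mono -> R) A B a0 b0 : NoDup A -> NoDup B -> In a0 A -> In b0 B ->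
  (forall a b, In a A -> In b B -> (a <> a0 \/ b <> b0) -> F a b = 0) ->
  rsum (fun a => rsum (fun b => F a b) B) A = F a0 b0.
Proof.
  intros HA HB Ha Hb HF.
  rewrite (rsum_ext _ (fun a => if mdec a0 a then rsum (fun b => F a b) B else 0)).
  2:{ intros a Ha'. destruct (mdec a0 a); auto. apply rsum_zero; intros; apply HF; auto. }
  rewrite (rsum_indicator a0 (fun a => rsum (fun b => F a b) B)); auto.
  rewrite (rsum_ext _ (fun b => if mdec b0 b then F a0 b else 0)).
  2:{ intros b Hb'. destruct (mdec b0 b); subst; auto. }
  apply rsum_indicator; auto.
Qed.

Lemma LC p r mp mr N : supp_len N p -> supp_len N r -> length mp = N -> length mr = N ->
  (forall a, coef p a <> 0 -> grle a mp) -> (forall b, coef r b <> 0 -> grle b mr) ->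
  coef (pmul p r) (vadd mp mr) = coef p mp * coef r mr.
Proof.
  intros Lp Lr Lmp Lmr Hp Hr.
  destruct (Req_dec (coef p mp) 0) as [Z|Z].
  { rewrite Z, Rmult_0_l. apply NNPP; intros C. apply coef_pmul_nz in C as [a [b [H1 [H2 H3]]]].
    destruct (grle_key a b mp mr N) as [E1 E2]; auto. subst; auto. }
  destruct (Req_dec (coef r mr) 0) as [Z'|Z'].
  { rewrite Z', Rmult_0_r. apply NNPP; intros C. apply coef_pmul_nz in C as [a [b [H1 [H2 H3]]]].
    destruct (grle_key a b mp mr N) as [E1 E2]; auto. subst; auto. }
  rewrite (coef_pmul p r _ (cover p) (cover r)); try apply cover_NoDup; try apply cover_supp.
  rewrite (rsum_ext _ (fun a => rsum (fun b => coef p a * (coef r b * indb (eqm (vadd a b) (vadd mp mr)))) (cover r))).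
  2:{ intros; rewrite rsum_scal; auto. }
  rewrite (rsum2_point _ _ _ mp mr); try apply cover_NoDup; try apply cover_supp; auto.
  - unfold indb, eqm. destruct (mdec (vadd mp mr) (vadd mp mr)); [lra|congruence].
  - intros a b Ha Hb Hne.
    destruct (Req_dec (coef p a) 0) as [E|E]; [rewrite E; lra|].
    destruct (Req_dec (coef r b) 0) as [E'|E']; [rewrite E'; lra|].
    unfold indb, eqm. destruct (mdec (vadd a b) (vadd mp mr)); [|lra].
    destruct (grle_key a b mp mr N); auto. destruct Hne; congruence.
Qed.

Lemma wf_supp N p : wf N p -> supp_len N p.
Proof.
  intros W a H. apply coef_nz_in in H. apply in_map_iff in H as [t [<- Ht]].
  unfold wf in W. rewrite Forall_forall in W. auto.
Qed.

Lemma supp_len_pmul N p r : supp_len N p -> supp_len N r -> supp_len N (pmul p r).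
Proof.
  intros Hp Hr c Hc. apply coef_pmul_nz in Hc as [a [b [H1 [H2 <-]]]].
  rewrite vadd_length; auto. rewrite Hp, Hr; auto.
Qed.

Definition sosp (qs : list mpoly) : mpoly := flat_map (fun q => pmul q q) qs.

Lemma grle_mdeg a m : grle a m -> (mdeg a <= mdeg m)%nat.
Proof. intros [[H|[H _]]|<-]; lia. Qed.

Lemma sos_supp_len N qs : Forall (wf N) qs -> supp_len N (sosp qs).
Proof.
  intros W c Hc. unfold sosp in Hc. rewrite coef_flat_map in Hc. apply rsum_nz in Hc as [q [Hq Hc]].
  rewrite Forall_forall in W. eapply supp_len_pmul; [| |eauto]; apply wf_supp; auto.
Qed.

Lemma SOS_top N qs : Forall (wf N) qs -> (exists q a, In q qs /\ coef q a <> 0) ->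
  exists m, length m = N /\ (forall q a, In q qs -> coef q a <> 0 -> grle a m) /\
    0 < coef (sosp qs) (vadd m m) /\ (forall c, coef (sosp qs) c <> 0 -> grle c (vadd m m)).
Proof.
  intros W [q0 [a0 [Hq0 Ha0]]].
  set (nzb := fun q a => if Req_EM_T (coef q a) 0 then false else true).
  set (L := flat_map (fun q => filter (nzb q) (cover q)) qs).
  assert (HL : forall a, In a L <-> exists q, In q qs /\ coef q a <> 0).
  { intros a. unfold L. rewrite in_flat_map. split.
    - intros [q [Hq Ha]]. apply filter_In in Ha as [_ Ha]. unfold nzb in Ha.
      destruct (Req_EM_T (coef q a) 0); [discriminate|eauto].
    - intros [q [Hq Ha]]. exists q; split; auto. apply filter_In; split. apply cover_supp; auto.
      unfold nzb; destruct (Req_EM_T (coef q a) 0); auto. }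
  rewrite Forall_forall in W.
  destruct (grle_max L N) as [m [Hm Hmax]].
  { intros E. assert (In a0 L) by (apply HL; eauto). rewrite E in H; contradiction. }
  { intros a Ha. apply HL in Ha as [q [Hq Ha]]. eapply wf_supp; eauto. }
  assert (Lm : length m = N). { apply HL in Hm as [q [Hq Ha]]. eapply wf_supp; eauto. }
  assert (Hgm : forall q a, In q qs -> coef q a <> 0 -> grle a m).
  { intros q a Hq Ha. apply Hmax, HL; eauto. }
  exists m. split; auto. split; auto. split.
  - unfold sosp. rewrite coef_flat_map.
    rewrite (rsum_ext _ (fun q => coef q m * coef q m)).
    2:{ intros q Hq. apply (LC q q m m N); try apply wf_supp; auto; intros; eapply Hgm; eauto. }
    apply HL in Hm as [q1 [Hq1 Hm1]].
    eapply Rlt_le_trans; [|apply (rsum_term_le (fun q => coef q m * coef q m) qs q1); auto].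
    + apply (Rsqr_pos_lt (coef q1 m)); auto.
    + intros; apply Rle_0_sqr.
  - intros c Hc. unfold sosp in Hc. rewrite coef_flat_map in Hc. apply rsum_nz in Hc as [q [Hq Hc]].
    apply coef_pmul_nz in Hc as [a [b [Ha [Hb <-]]]].
    apply (grle_add2 a m b m N); auto; try (eapply Hgm; eauto); eapply (wf_supp N q); eauto.
Qed.

Lemma DEG_h N qs s h mh D : Forall (wf N) qs -> peq s (sosp qs) -> supp_len N h -> length mh = N ->
  coef h mh <> 0 -> (forall b, coef h b <> 0 -> grle b mh) -> deg_le D (pmul s h) ->
  forall q a, In q qs -> coef q a <> 0 -> (2 * mdeg a + mdeg mh <= D)%nat.
Proof.
  intros W E Lh Lmh Hmh Hmax Hdeg q a Hq Ha.
  destruct (SOS_top N qs W) as [m [Lm [Hgm [Hpos Hsup]]]]; [eauto|].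
  assert (Hc : coef (pmul s h) (vadd (vadd m m) mh) <> 0).
  { rewrite (peq_pmul s (sosp qs) h E). rewrite (LC _ _ _ _ N); auto.
    - intros C. apply Rmult_integral in C as [C|C]; [lra|auto].
    - apply sos_supp_len; auto.
    - rewrite vadd_length; congruence. }
  apply Hdeg in Hc. rewrite !mdeg_vadd in Hc.
  pose proof (grle_mdeg _ _ (Hgm q a Hq Ha)). lia.
Qed.

Lemma DEG_0 N qs s D : Forall (wf N) qs -> peq s (sosp qs) -> deg_le D s ->
  forall q a, In q qs -> coef q a <> 0 -> (2 * mdeg a <= D)%nat.
Proof.
  intros W E Hdeg q a Hq Ha.
  destruct (SOS_top N qs W) as [m [Lm [Hgm [Hpos Hsup]]]]; [eauto|].
  assert (Hc : coef s (vadd m m) <> 0) by (rewrite E; lra).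
  apply Hdeg in Hc. rewrite !mdeg_vadd in Hc.
  pose proof (grle_mdeg _ _ (Hgm q a Hq Ha)). lia.
Qed.

Definition qform (q : mpoly) (M : mono -> mono -> R) : R :=
  rsum (fun t => snd t * rsum (fun t' => snd t' * M (fst t) (fst t')) q) q.

Lemma qform_TS q M I : NoDup I -> (forall a, coef q a <> 0 -> In a I) ->
  qform q M = rsum (fun a => rsum (fun b => coef q a * M a b * coef q b) I) I.
Proof.
  intros HI Hs. unfold qform.
  rewrite (TS q (fun a => rsum (fun t' => snd t' * M a (fst t')) q) I); auto. apply rsum_ext; intros a _.
  rewrite (TS q (fun b => M a b) I); auto. rewrite <- rsum_scal. apply rsum_ext; intros; lra.
Qed.

Lemma qform_psd q M I : NoDup I -> (forall a, coef q a <> 0 -> In a I) -> psd I M -> 0 <= qform q M.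
Proof. intros HI Hs Hp. rewrite (qform_TS q M I) by auto. apply Hp. Qed.

Lemma qform_zero q M I : NoDup I -> (forall a, coef q a <> 0 -> In a I) ->
  (forall a b, In a I -> In b I -> M a b = 0) -> qform q M = 0.
Proof.
  intros HI Hs Hz. rewrite (qform_TS q M I) by auto. apply rsum_zero; intros a Ha.
  apply rsum_zero; intros b Hb. rewrite Hz; auto. lra.
Qed.

Lemma Ly_sos y qs : Ly y (sosp qs) = rsum (fun q => qform q (momat y)) qs.
Proof. unfold sosp. rewrite Ly_flat_map. apply rsum_ext; intros q _. apply Ly_pmul2. Qed.

Lemma Ly_sos_h y qs h : Ly y (pmul (sosp qs) h) = rsum (fun q => qform q (locmat h y)) qs.
Proof. unfold sosp. rewrite pmul_flat_map, Ly_flat_map. apply rsum_ext; intros q _. apply Ly_pmul3. Qed.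

Lemma HMAX N h b0 : supp_len N h -> coef h b0 <> 0 ->
  exists mh, length mh = N /\ coef h mh <> 0 /\ (forall b, coef h b <> 0 -> grle b mh) /\ (mdeg b0 <= mdeg mh)%nat.
Proof.
  intros Lh Hb0.
  set (nzb := fun a => if Req_EM_T (coef h a) 0 then false else true).
  set (L := filter nzb (cover h)).
  assert (HL : forall a, In a L <-> coef h a <> 0).
  { intros a. unfold L. rewrite filter_In. unfold nzb. split.
    - intros [_ H]. destruct (Req_EM_T (coef h a) 0); [discriminate|auto].
    - intros H; split; [apply cover_supp; auto|]. destruct (Req_EM_T (coef h a) 0); auto. }
  destruct (grle_max L N) as [m [Hm Hmax]].
  { intros E. assert (In b0 L) by (apply HL; auto). rewrite E in H; contradiction. }
  { intros a Ha. apply Lh, HL; auto. }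
  exists m. apply HL in Hm. repeat split; auto.
  - intros b Hb. apply Hmax, HL; auto.
  - apply grle_mdeg, Hmax, HL; auto.
Qed.

Lemma coef_pscale c p a : coef (pscale c p) a = c * coef p a.
Proof.
  unfold coef, pscale. rewrite rsum_map, <- rsum_scal. apply rsum_ext; intros t _. simpl.
  unfold mono in *. repeat destruct (list_eq_dec _ _ _); subst; try lra; congruence.
Qed.

Lemma locmat_pscale c p y a b : locmat (pscale c p) y a b = c * locmat p y a b.
Proof. unfold locmat, pscale. rewrite rsum_map, <- rsum_scal. apply rsum_ext; intros t _. simpl. lra. Qed.

Lemma fold_max_ge x l : In x l -> (x <= fold_right Nat.max 0 l)%nat.
Proof. induction l; simpl; intros H; [contradiction|]. destruct H as [<-|H]; [lia|]. specialize (IHl H); lia. Qed.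

Lemma pdeg_ge g a : coef g a <> 0 -> (mdeg a <= pdeg g)%nat.
Proof.
  intros H. apply coef_nz_in in H as H1. apply in_map_iff in H1 as [t [Et Ht]].
  unfold pdeg. apply fold_max_ge. apply in_map_iff. exists t. split; auto.
  rewrite Et. destruct (Req_EM_T (coef g a) 0); [contradiction|auto].
Qed.

Lemma coef_homog_cons g c a :
  coef (homog g) (c :: a) = if Nat.eq_dec c (pdeg g - mdeg a) then coef g a else 0.
Proof.
  unfold coef, homog. rewrite rsum_map. destruct (Nat.eq_dec c (pdeg g - mdeg a)).
  - apply rsum_ext; intros t _. cbn [fst snd]. unfold mono in *.
    destruct (list_eq_dec Nat.eq_dec ((pdeg g - mdeg (fst t))%nat :: fst t) (c :: a)) as [E|E]; destruct (list_eq_dec Nat.eq_dec (fst t) a) as [E'|E']; auto.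
    + injection E; intros; exfalso; apply E'; assumption.
    + exfalso; apply E; rewrite E'; subst c; reflexivity.
  - apply rsum_zero; intros t _. cbn [fst snd]. unfold mono in *. destruct (list_eq_dec _ _ _) as [E|E]; auto.
    injection E; intros; subst. congruence.
Qed.

Lemma coef_homog_nil g : coef (homog g) [] = 0.
Proof. unfold coef, homog. rewrite rsum_map. apply rsum_zero; intros t _. cbn [fst snd]. destruct (list_eq_dec _ _ _); auto. discriminate. Qed.

Lemma homog_supp g b : coef (homog g) b <> 0 ->
  exists a, b = (pdeg g - mdeg a)%nat :: a /\ coef g a <> 0 /\ mdeg b = pdeg g.
Proof.
  destruct b as [|c a]. { rewrite coef_homog_nil; lra. }
  rewrite coef_homog_cons. destruct (Nat.eq_dec c (pdeg g - mdeg a)); [|lra].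
  intros H. exists a. subst. split; auto. split; auto. rewrite mdeg_cons. pose proof (pdeg_ge g a H). lia.
Qed.

Lemma homog_supp_len n g : wf n g -> supp_len (S n) (homog g).
Proof.
  intros W b Hb. apply homog_supp in Hb as [a [-> [Ha _]]]. simpl. f_equal. eapply wf_supp; eauto.
Qed.

Lemma evec_length N i : length (evec N i) = N.
Proof. unfold evec. rewrite length_map, length_seq. auto. Qed.

Lemma evec_mdeg0 e i N s : (i < s)%nat -> mdeg (map (fun j => if Nat.eqb j i then e else 0%nat) (seq s N)) = 0%nat.
Proof.
  revert s; induction N; intros s H; [reflexivity|]. cbn [seq map]. rewrite mdeg_cons, IHN by lia.
  destruct (Nat.eqb_spec s i); lia.
Qed.

Lemma evec_mdeg1 e i N s : (s <= i < s + N)%nat -> mdeg (map (fun j => if Nat.eqb j i then e else 0%nat) (seq s N)) = e.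
Proof.
  revert s; induction N; intros s H; [lia|]. cbn [seq map]. rewrite mdeg_cons.
  destruct (Nat.eqb_spec s i).
  - rewrite evec_mdeg0 by lia. lia.
  - rewrite IHN by lia. lia.
Qed.

Lemma mdeg_evec N i : (i < N)%nat -> mdeg (evec N i) = 1%nat.
Proof. intros; apply evec_mdeg1; lia. Qed.

Definition v0 (N : nat) : mono := map (fun j => if Nat.eqb j 0 then 2%nat else 0%nat) (seq 0 N).

Lemma mdeg_v0 n : mdeg (v0 (S n)) = 2%nat.
Proof. apply evec_mdeg1; lia. Qed.

Lemma coef_pvar N i a : coef (pvar N i) a = if mdec (evec N i) a then 1 else 0.
Proof. unfold coef, pvar. simpl rsum. cbn [fst snd]. rewrite Rplus_0_r. reflexivity. Qed.

Lemma pvar_supp N i : supp_len N (pvar N i).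
Proof. intros a. rewrite coef_pvar. destruct (list_eq_dec _ _ _); [|lra]. subst. rewrite evec_length; auto. Qed.

Lemma nrm1_wf N : wf N (nrm1 N).
Proof.
  unfold wf, nrm1. apply Forall_app. split.
  - apply Forall_forall. intros t Ht. apply in_map_iff in Ht as [i [<- _]]. simpl. rewrite length_map, length_seq; auto.
  - constructor; [|constructor]. simpl. unfold zeros. apply repeat_length.
Qed.

Lemma coef_nrm1_v0 n : coef (nrm1 (S n)) (v0 (S n)) = 1.
Proof.
  unfold nrm1. rewrite coef_app. unfold coef at 1. rewrite rsum_map. cbn [seq map rsum fst snd].
  unfold v0. cbn [seq map]. simpl (Nat.eqb 0 0).
  rewrite rsum_zero.
  - unfold coef, zeros. cbn [repeat rsum fst snd].
    destruct (list_eq_dec Nat.eq_dec (2%nat :: _) (2%nat :: _)) as [_|C]; [|congruence].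
    destruct (list_eq_dec Nat.eq_dec (0%nat :: _) (2%nat :: _)) as [C|_]; [discriminate|]. lra.
  - intros i Hi. apply in_seq in Hi. cbn [fst snd].
    destruct (Nat.eqb_spec 0 i); [lia|].
    destruct (list_eq_dec Nat.eq_dec (0%nat :: _) (2%nat :: _)) as [C|_]; [discriminate|]. auto.
Qed.

Lemma Gtilde_In n gs h : In h (Gtilde n gs) ->
  (exists g, In g gs /\ h = homog g) \/ h = pvar (S n) 0 \/ h = nrm1 (S n) \/ h = pscale (-1) (nrm1 (S n)).
Proof.
  unfold Gtilde. rewrite in_app_iff, in_map_iff. intros [[g [<- Hg]]|H]; [left; eauto|right].
  simpl in H. intuition.
Qed.

Definition Dcond (n k : nat) (gs : list mpoly) (y : mono -> R) : Prop :=
  psd (monos (S n) (k - 1)) (locmat (pvar (S n) 0) y) /\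
  (forall a b, In a (monos (S n) (k - 1)) -> In b (monos (S n) (k - 1)) -> locmat (nrm1 (S n)) y a b = 0) /\
  psd (monos (S n) k) (momat y) /\
  Forall (fun g => psd (monos (S n) (k - halfceil (pdeg g))) (locmat (homog g) y)) gs.

Lemma Ly_pmul_zero y s h : (forall b, coef h b = 0) -> Ly y (pmul s h) = 0.
Proof.
  intros Hz. rewrite Ly_pmul. apply rsum_zero; intros t _.
  rewrite (TS h (fun b => y (vadd (fst t) b)) []).
  - simpl; lra.
  - constructor.
  - intros a Ha; exfalso; auto.
Qed.

Lemma is_sos_wf N s : is_sos N s -> exists qs, Forall (wf N) qs /\ peq s (sosp qs).
Proof. auto. Qed.

Lemma POS_pair n k gs y s h : (1 <= k)%nat -> Forall (wf n) gs -> Dcond n k gs y -> is_sos (S n) s ->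
  deg_le (2 * k) (pmul s h) -> In h (Gtilde n gs) -> 0 <= Ly y (pmul s h).
Proof.
  intros Hk Wg [Dx [Dn [Dm Dg]]] [qs [Wq Es]] Hdeg Hh.
  assert (Hmon : forall d a, In a (monos (S n) d) <-> length a = S n /\ (mdeg a <= d)%nat) by apply monos_In.
  rewrite (Ly_peq y _ _ (peq_pmul _ _ h Es)). rewrite Ly_sos_h.
  assert (Lq : forall q a, In q qs -> coef q a <> 0 -> length a = S n).
  { intros q a Hq Ha. rewrite Forall_forall in Wq. eapply wf_supp; eauto. }
  apply Gtilde_In in Hh as [[g [Hg Eh]] | [Eh | [Eh | Eh]]]; subst h.
  - destruct (classic (exists b0, coef (homog g) b0 <> 0)) as [[b0 Hb0]|Hnz].
    2:{ rewrite <- Ly_sos_h. rewrite Ly_pmul_zero; [lra|]. intros b; apply NNPP; intros C; eauto. }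
    rewrite Forall_forall in Wg, Dg.
    pose proof (homog_supp_len n g (Wg g Hg)) as Lh.
    destruct (HMAX _ _ b0 Lh Hb0) as [mh [Lmh [Hmh [Hmax Hge]]]].
    apply homog_supp in Hb0 as [a0 [_ [_ Hdb0]]].
    apply rsum_nonneg; intros q Hq. apply (qform_psd q _ (monos (S n) (k - halfceil (pdeg g)))).
    + apply NoDup_monos.
    + intros a Ha. apply Hmon. split; [eauto|].
      pose proof (DEG_h (S n) qs s (homog g) mh (2*k) Wq Es Lh Lmh Hmh Hmax Hdeg q a Hq Ha).
      unfold halfceil. pose proof (Nat.div_mod (pdeg g + 1) 2 ltac:(lia)).
      pose proof (Nat.mod_upper_bound (pdeg g + 1) 2 ltac:(lia)). lia.
    + apply Dg; auto.
  - apply rsum_nonneg; intros q Hq. apply (qform_psd q _ (monos (S n) (k - 1))); auto.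
    + apply NoDup_monos.
    + intros a Ha. apply Hmon. split; [eauto|].
      assert (Hc : coef (pvar (S n) 0) (evec (S n) 0) <> 0).
      { rewrite coef_pvar. destruct (list_eq_dec _ _ _); [lra|congruence]. }
      destruct (HMAX _ _ _ (pvar_supp (S n) 0) Hc) as [mh [Lmh [Hmh [Hmax Hge]]]].
      pose proof (DEG_h (S n) qs s _ mh (2*k) Wq Es (pvar_supp (S n) 0) Lmh Hmh Hmax Hdeg q a Hq Ha).
      rewrite mdeg_evec in Hge by lia. lia.
  - assert (Hc : coef (nrm1 (S n)) (v0 (S n)) <> 0) by (rewrite coef_nrm1_v0; lra).
    pose proof (wf_supp _ _ (nrm1_wf (S n))) as Ls.
    destruct (HMAX _ _ _ Ls Hc) as [mh [Lmh [Hmh [Hmax Hge]]]]. rewrite mdeg_v0 in Hge.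
    right. symmetry. apply rsum_zero; intros q Hq. apply (qform_zero q _ (monos (S n) (k - 1))); auto.
    + apply NoDup_monos.
    + intros a Ha. apply Hmon. split; [eauto|].
      pose proof (DEG_h (S n) qs s _ mh (2*k) Wq Es Ls Lmh Hmh Hmax Hdeg q a Hq Ha). lia.
  - assert (Hc : coef (pscale (-1) (nrm1 (S n))) (v0 (S n)) <> 0) by (rewrite coef_pscale, coef_nrm1_v0; lra).
    assert (Ls : supp_len (S n) (pscale (-1) (nrm1 (S n)))).
    { intros a Ha. rewrite coef_pscale in Ha. apply (wf_supp _ _ (nrm1_wf (S n))). intros E; rewrite E in Ha; lra. }
    destruct (HMAX _ _ _ Ls Hc) as [mh [Lmh [Hmh [Hmax Hge]]]]. rewrite mdeg_v0 in Hge.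
    right. symmetry. apply rsum_zero; intros q Hq. apply (qform_zero q _ (monos (S n) (k - 1))); auto.
    + apply NoDup_monos.
    + intros a Ha. apply Hmon. split; [eauto|].
      pose proof (DEG_h (S n) qs s _ mh (2*k) Wq Es Ls Lmh Hmh Hmax Hdeg q a Hq Ha). lia.
    + intros a b Ha Hb. rewrite locmat_pscale, Dn; auto. lra.
Qed.

Lemma Forall2_combine {A B} (P : A -> B -> Prop) l1 l2 x y :
  Forall2 P l1 l2 -> In (x, y) (combine l1 l2) -> P x y /\ In x l1 /\ In y l2.
Proof.
  induction 1; simpl; intros H'; [contradiction|].
  destruct H' as [E|E]; [injection E; intros; subst; auto|].
  destruct (IHForall2 E) as [? [? ?]]; auto.
Qed.

Lemma Ly_concat y (F : mpoly * mpoly -> mpoly) l : Ly y (concat (map F l)) = rsum (fun x => Ly y (F x)) l.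
Proof. unfold Ly. rewrite rsum_concat, rsum_map. auto. Qed.

Lemma POS n k gs y f : (1 <= k)%nat -> Forall (wf n) gs -> Dcond n k gs y ->
  in_Qk (S n) k (Gtilde n gs) f -> 0 <= Ly y f.
Proof.
  intros Hk Wg D [s0 [ss [[qs0 [Wq0 E0]] [Hd0 [Hss [H2 Ef]]]]]].
  rewrite (Ly_peq y _ _ Ef), Ly_app, Ly_concat.
  apply Rplus_le_le_0_compat.
  - rewrite (Ly_peq y _ _ E0). rewrite Ly_sos. apply rsum_nonneg; intros q Hq.
    destruct D as [_ [_ [Dm _]]].
    apply (qform_psd q _ (monos (S n) k)); auto. apply NoDup_monos.
    intros a Ha. apply monos_In. split.
    + rewrite Forall_forall in Wq0. eapply wf_supp; eauto.
    + pose proof (DEG_0 (S n) qs0 s0 (2 * k) Wq0 E0 Hd0 q a Hq Ha). lia.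
  - apply rsum_nonneg. intros [s h] Hsh. simpl.
    destruct (Forall2_combine _ _ _ _ _ H2 Hsh) as [Hdeg [Hs Hh]].
    rewrite Forall_forall in Hss.
    apply (POS_pair n k gs y s h); auto.
Qed.

Lemma concat_nil_mults (H : list mpoly) :
  concat (map (fun sh : mpoly * mpoly => pmul (fst sh) (snd sh)) (combine (map (fun _ => []) H) H)) = [].
Proof. induction H; simpl; auto. Qed.

Lemma sos_nil N : is_sos N [].
Proof. exists []. split; [constructor|]. intros a; reflexivity. Qed.

Lemma Forall2_nil_mults k (H : list mpoly) : Forall2 (fun s h => deg_le (2 * k) (pmul s h)) (map (fun _ => []) H) H.
Proof. induction H; simpl; constructor; auto. intros c Hc. exfalso; apply Hc; reflexivity. Qed.

Lemma Forall_sos_nil N (H : list mpoly) : Forall (is_sos N) (map (fun _ => []) H).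
Proof. induction H; simpl; constructor; auto. apply sos_nil. Qed.

Lemma Qk_sos0 N k H s : is_sos N s -> deg_le (2 * k) s -> in_Qk N k H s.
Proof.
  intros Hs Hd. exists s, (map (fun _ => []) H). repeat split; auto.
  - apply Forall_sos_nil.
  - apply Forall2_nil_mults.
  - rewrite concat_nil_mults, app_nil_r. intros a; reflexivity.
Qed.

Lemma Qk_head N k h H s : is_sos N s -> deg_le (2 * k) (pmul s h) -> in_Qk N k (h :: H) (pmul s h).
Proof.
  intros Hs Hd. exists [], (s :: map (fun _ => []) H). repeat split.
  - apply sos_nil.
  - intros a Ha; exfalso; apply Ha; reflexivity.
  - constructor; auto. apply Forall_sos_nil.
  - constructor; auto. apply Forall2_nil_mults.
  - simpl. rewrite concat_nil_mults, app_nil_r. intros a; reflexivity.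
Qed.

Lemma Qk_cons N k h H f : in_Qk N k H f -> in_Qk N k (h :: H) f.
Proof.
  intros [s0 [ss [Hs0 [Hd0 [Hss [H2 Ef]]]]]].
  exists s0, ([] :: ss). repeat split; auto.
  - constructor; auto. apply sos_nil.
  - constructor; auto. intros a Ha; exfalso; apply Ha; reflexivity.
Qed.

Lemma Qk_in N k h H s : In h H -> is_sos N s -> deg_le (2 * k) (pmul s h) -> in_Qk N k H (pmul s h).
Proof.
  induction H; simpl; intros Hin Hs Hd; [contradiction|].
  destruct Hin as [<-|Hin]; [apply Qk_head; auto|apply Qk_cons; auto].
Qed.

Definition qv (I : list mono) (v : mono -> R) : mpoly := map (fun a => (a, v a)) I.

Lemma qform_qv I v M : qform (qv I v) M = rsum (fun a => rsum (fun b => v a * M a b * v b) I) I.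
Proof.
  unfold qform, qv. rewrite rsum_map. apply rsum_ext; intros a _. rewrite rsum_map. simpl.
  rewrite <- rsum_scal. apply rsum_ext; intros; lra.
Qed.

Lemma qv_sos N I v : (forall a, In a I -> length a = N) -> is_sos N (pmul (qv I v) (qv I v)).
Proof.
  intros HI. exists [qv I v]. split.
  - constructor; [|constructor]. unfold wf, qv. apply Forall_forall. intros t Ht.
    apply in_map_iff in Ht as [a [<- Ha]]. simpl; auto.
  - intros a. simpl. rewrite app_nil_r. reflexivity.
Qed.

Lemma qv_supp I v a : coef (qv I v) a <> 0 -> In a I.
Proof. intros H. apply coef_nz_in in H. unfold qv in H. rewrite map_map in H. simpl in H. rewrite map_id in H. auto. Qed.

Lemma qv_deg2 I v d : (forall a, In a I -> (mdeg a <= d)%nat) ->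
  forall c, coef (pmul (qv I v) (qv I v)) c <> 0 -> (mdeg c <= 2 * d)%nat.
Proof.
  intros HI c Hc. apply coef_pmul_nz in Hc as [a [b [Ha [Hb <-]]]].
  apply qv_supp in Ha, Hb. rewrite mdeg_vadd. pose proof (HI a Ha). pose proof (HI b Hb). lia.
Qed.

Lemma qv_deg3 I v d h e : (forall a, In a I -> (mdeg a <= d)%nat) ->
  (forall b, coef h b <> 0 -> (mdeg b <= e)%nat) ->
  forall c, coef (pmul (pmul (qv I v) (qv I v)) h) c <> 0 -> (mdeg c <= 2 * d + e)%nat.
Proof.
  intros HI Hh c Hc. apply coef_pmul_nz in Hc as [a [b [Ha [Hb <-]]]].
  apply (qv_deg2 I v d HI) in Ha. apply Hh in Hb. rewrite mdeg_vadd. lia.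
Qed.

Lemma qform_pscale q c p y : qform q (locmat (pscale c p) y) = c * qform q (locmat p y).
Proof.
  unfold qform. rewrite <- rsum_scal. apply rsum_ext; intros t _.
  rewrite (rsum_ext _ (fun t' => c * (snd t' * locmat p y (fst t) (fst t')))).
  2:{ intros; rewrite locmat_pscale; lra. }
  rewrite rsum_scal. lra.
Qed.

Lemma locmat_sym h y a b : locmat h y a b = locmat h y b a.
Proof. unfold locmat. rewrite vadd_comm. auto. Qed.

Lemma loc_pos n k gs y h I v d e : In h (Gtilde n gs) -> supp_len (S n) h ->
  (forall b, coef h b <> 0 -> (mdeg b <= e)%nat) -> (2 * d + e <= 2 * k)%nat ->
  (forall a, In a I -> length a = S n /\ (mdeg a <= d)%nat) ->
  (forall f, in_Qk (S n) k (Gtilde n gs) f -> 0 <= Ly y f) ->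
  0 <= qform (qv I v) (locmat h y).
Proof.
  intros Hh Lh Hb Hde HI Hpos. unfold qform. rewrite <- Ly_pmul3. apply Hpos. apply Qk_in; auto.
  - apply qv_sos. intros a Ha; apply HI; auto.
  - intros c Hc. apply (qv_deg3 I v d h e) in Hc; [lia| |auto]. intros a Ha; apply HI; auto.
Qed.

Lemma pvar_deg N b : coef (pvar N 0) b <> 0 -> (mdeg b <= 1)%nat.
Proof.
  rewrite coef_pvar. destruct (list_eq_dec _ _ _); [|lra]. subst. intros _.
  destruct N. unfold evec; simpl. unfold mdeg; simpl; lia. rewrite mdeg_evec; lia.
Qed.

Lemma repeat_mdeg N : mdeg (repeat 0%nat N) = 0%nat.
Proof. induction N; [reflexivity|]. cbn [repeat]. rewrite mdeg_cons; lia. Qed.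

Lemma nrm1_deg N b : coef (nrm1 N) b <> 0 -> (mdeg b <= 2)%nat.
Proof.
  intros H. apply coef_nz_in in H. unfold nrm1 in H. rewrite map_app, in_app_iff in H.
  destruct H as [H|[H|[]]].
  - rewrite map_map in H. apply in_map_iff in H as [i [<- Hi]]. simpl. apply in_seq in Hi.
    rewrite evec_mdeg1; lia.
  - simpl in H. subst. unfold zeros. rewrite repeat_mdeg. lia.
Qed.

Lemma nrm1_supp N : supp_len N (nrm1 N).
Proof. apply wf_supp, nrm1_wf. Qed.

Lemma mnrm1_supp N : supp_len N (pscale (-1) (nrm1 N)).
Proof. intros a Ha. rewrite coef_pscale in Ha. apply nrm1_supp. intros E; rewrite E in Ha; lra. Qed.

Lemma mnrm1_deg N b : coef (pscale (-1) (nrm1 N)) b <> 0 -> (mdeg b <= 2)%nat.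
Proof. intros Ha. rewrite coef_pscale in Ha. apply (nrm1_deg N). intros E; rewrite E in Ha; lra. Qed.

Lemma RIESZ2 n k gs y : (1 <= k)%nat -> Forall (wf n) gs ->
  Forall (fun g => (halfceil (pdeg g) <= k)%nat) gs ->
  (forall f, in_Qk (S n) k (Gtilde n gs) f -> 0 <= Ly y f) -> Dcond n k gs y.
Proof.
  intros Hk Wg Hhc Hpos.
  assert (GX : In (pvar (S n) 0) (Gtilde n gs)) by (unfold Gtilde; apply in_or_app; right; simpl; auto).
  assert (GN : In (nrm1 (S n)) (Gtilde n gs)) by (unfold Gtilde; apply in_or_app; right; simpl; auto).
  assert (GM : In (pscale (-1) (nrm1 (S n))) (Gtilde n gs)) by (unfold Gtilde; apply in_or_app; right; simpl; auto).
  assert (Im : forall d a, In a (monos (S n) d) -> length a = S n /\ (mdeg a <= d)%nat) by (intros; apply monos_In; auto).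
  assert (Nz : forall I v, (forall a, In a I -> length a = S n /\ (mdeg a <= k - 1)%nat) ->
             qform (qv I v) (locmat (nrm1 (S n)) y) = 0).
  { intros I v HI.
    pose proof (loc_pos n k gs y _ I v (k - 1) 2 GN (nrm1_supp _) (nrm1_deg _) ltac:(lia) HI Hpos).
    pose proof (loc_pos n k gs y _ I v (k - 1) 2 GM (mnrm1_supp _) (mnrm1_deg _) ltac:(lia) HI Hpos).
    rewrite qform_pscale in H0. lra. }
  split; [|split; [|split]].
  - intros v. rewrite <- qform_qv. apply (loc_pos n k gs y _ _ v (k - 1) 1 GX (pvar_supp _ _) (pvar_deg _)); auto. lia.
  - intros a b Ha Hb.
    pose proof (Nz [a] (fun _ => 1) ltac:(intros c [<-|[]]; auto)) as E1.
    pose proof (Nz [b] (fun _ => 1) ltac:(intros c [<-|[]]; auto)) as E2.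
    pose proof (Nz [a; b] (fun _ => 1) ltac:(intros c [<-|[<-|[]]]; auto)) as E3.
    rewrite qform_qv in E1, E2, E3. simpl in E1, E2, E3.
    rewrite (locmat_sym _ _ b a) in E3. lra.
  - intros v. rewrite <- qform_qv. unfold qform. rewrite <- Ly_pmul2. apply Hpos. apply Qk_sos0.
    + apply qv_sos. intros a Ha; apply (Im k); auto.
    + intros c Hc. apply (qv_deg2 (monos (S n) k) v k) in Hc; auto. intros a Ha; apply (Im k); auto.
  - rewrite Forall_forall in Wg, Hhc |- *. intros g Hg v. rewrite <- qform_qv.
    assert (Gg : In (homog g) (Gtilde n gs)) by (unfold Gtilde; apply in_or_app; left; apply in_map; auto).
    apply (loc_pos n k gs y _ _ v (k - halfceil (pdeg g)) (pdeg g) Gg (homog_supp_len n g (Wg g Hg))); auto.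
    + intros b Hb. apply homog_supp in Hb as [? [_ [_ ->]]]. lia.
    + specialize (Hhc g Hg). unfold halfceil in *. pose proof (Nat.div_mod (pdeg g + 1) 2 ltac:(lia)).
      pose proof (Nat.mod_upper_bound (pdeg g + 1) 2 ltac:(lia)). lia.
Qed.

Definition ip {T} (I : list T) (u v : T -> R) := rsum (fun i => u i * v i) I.
Definition nsq {T} (I : list T) (u : T -> R) := ip I u u.

Lemma nsq_nonneg {T} (I : list T) u : 0 <= nsq I u.
Proof. apply rsum_nonneg; intros; nra. Qed.

Lemma CV_const c : Un_cv (fun _ : nat => c) c.
Proof. intros eps H. exists 0%nat. intros. unfold R_dist. rewrite Rminus_diag, Rabs_R0. auto. Qed.

Lemma rsum_cv {T} (l : list T) (F : nat -> T -> R) (L : T -> R) :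
  (forall a, In a l -> Un_cv (fun j => F j a) (L a)) -> Un_cv (fun j => rsum (F j) l) (rsum L l).
Proof.
  induction l; simpl; intros H. apply CV_const.
  apply CV_plus; auto.
Qed.

Lemma sq_lt_abs x e : 0 < e -> x * x < e * e -> Rabs x < e.
Proof. intros He H. unfold Rabs. destruct (Rcase_abs x); nra. Qed.

Lemma inv_S_le N j : (0 < N)%nat -> (N <= j)%nat -> / INR (S j) <= / INR N.
Proof.
  intros H1 H2. apply Rinv_le_contravar. apply lt_0_INR; auto. apply le_INR; lia.
Qed.

Lemma SEP {T} (I : list T) (W : (T -> R) -> Prop) (p : T -> R) (dl : R) :
  (forall u v, W u -> W v -> W (fun i => u i + v i)) ->
  (forall t u, 0 <= t -> W u -> W (fun i => t * u i)) ->
  W (fun _ => 0) -> 0 < dl ->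
  (forall w, W w -> dl <= nsq I (fun i => p i - w i)) ->
  exists c, ip I c p < 0 /\ forall w, W w -> 0 <= ip I c w.
Proof.
  intros Hadd Hsc H0 Hdl Hfar.
  set (E := fun r => exists w, W w /\ r = - nsq I (fun i => p i - w i)).
  assert (HE : bound E).
  { exists 0. intros r [w [_ ->]]. pose proof (nsq_nonneg I (fun i => p i - w i)). lra. }
  assert (HE2 : exists r, E r) by (eexists; exists (fun _ => 0); split; eauto).
  destruct (completeness E HE HE2) as [m [Hub Hlub]].
  set (d2 := - m).
  assert (Hlow : forall w, W w -> d2 <= nsq I (fun i => p i - w i)).
  { intros w Hw. assert (E (- nsq I (fun i => p i - w i))) by (exists w; auto). apply Hub in H. unfold d2; lra. }
  assert (Hd2 : dl <= d2).
  { assert (m <= - dl); [|unfold d2; lra]. apply Hlub. intros r [w [Hw ->]]. pose proof (Hfar w Hw). lra. }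
  assert (Happ : forall eps, 0 < eps -> exists w, W w /\ nsq I (fun i => p i - w i) < d2 + eps).
  { intros eps Heps. apply NNPP; intros C.
    assert (is_upper_bound E (m - eps)).
    { intros r [w [Hw ->]]. apply Rnot_lt_le. intros C'. apply C. exists w. split; auto. unfold d2; lra. }
    apply Hlub in H. lra. }
  assert (Hseq : forall j : nat, exists w, W w /\ nsq I (fun i => p i - w i) < d2 + / INR (S j)).
  { intros j. apply Happ. apply Rinv_0_lt_compat, lt_0_INR; lia. }
  set (ws := fun j => proj1_sig (constructive_indefinite_description _ (Hseq j))).
  assert (Hws : forall j, W (ws j) /\ nsq I (fun i => p i - ws j i) < d2 + / INR (S j)).
  { intros j. exact (proj2_sig (constructive_indefinite_description _ (Hseq j))). }
  clearbody ws.
  assert (Hpar : forall i j, nsq I (fun a => ws i a - ws j a) <= 2 * / INR (S i) + 2 * / INR (S j)).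
  { intros i j. destruct (Hws i) as [Wi Ni]. destruct (Hws j) as [Wj Nj].
    set (mid := fun a => / 2 * ws i a + / 2 * ws j a).
    assert (Wm : W mid).
    { apply (Hadd (fun a => / 2 * ws i a) (fun a => / 2 * ws j a)); apply Hsc; auto; lra. }
    pose proof (Hlow mid Wm).
    assert (Id : nsq I (fun a => ws i a - ws j a) = 2 * nsq I (fun a => p a - ws i a) + 2 * nsq I (fun a => p a - ws j a)
       - 4 * nsq I (fun a => p a - mid a)).
    { unfold nsq, ip. rewrite <- !rsum_scal, <- rsum_plus, <- rsum_minus. apply rsum_ext; intros; unfold mid; field. }
    set (a1 := / INR (S i)) in *. set (a2 := / INR (S j)) in *. lra. }
  assert (Hcau : forall a, In a I -> Cauchy_crit (fun j => ws j a)).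
  { intros a Ha eps Heps.
    destruct (archimed_cor1 (eps * eps / 4)) as [N [HN HN0]]. { nra. }
    exists N. intros i j Hi Hj. unfold R_dist. apply sq_lt_abs; auto.
    pose proof (Hpar i j).
    assert ((ws i a - ws j a) * (ws i a - ws j a) <= nsq I (fun a => ws i a - ws j a)).
    { apply (rsum_term_le (fun a0 => (ws i a0 - ws j a0) * (ws i a0 - ws j a0))); auto. intros; apply Rle_0_sqr. }
    pose proof (inv_S_le N i HN0 ltac:(lia)). pose proof (inv_S_le N j HN0 ltac:(lia)).
    set (a1 := / INR (S i)) in *. set (a2 := / INR (S j)) in *. set (b := / INR N) in *. lra. }
  assert (Hq : forall a, exists l, In a I -> Un_cv (fun j => ws j a) l).
  { intros a. destruct (classic (In a I)) as [Ha|Ha].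
    - destruct (R_complete _ (Hcau a Ha)) as [l Hl]. exists l; auto.
    - exists 0; intros; contradiction. }
  set (q := fun a => proj1_sig (constructive_indefinite_description _ (Hq a))).
  assert (Hqc : forall a, In a I -> Un_cv (fun j => ws j a) (q a)).
  { intros a Ha. exact (proj2_sig (constructive_indefinite_description _ (Hq a)) Ha). }
  clearbody q.
  assert (K1 : forall w t, W w -> 0 <= t <= 1 -> d2 <= nsq I (fun a => p a - ((1 - t) * q a + t * w a))).
  { intros w t Hw Ht.
    apply (@Rle_cv_lim (fun _ => d2) (fun j => nsq I (fun a => p a - ((1 - t) * ws j a + t * w a))) d2).
    - intros j. apply Hlow. apply (Hadd (fun a => (1 - t) * ws j a) (fun a => t * w a)); apply Hsc; try lra; auto.
      apply Hws.
    - apply CV_const.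
    - apply rsum_cv. intros a Ha.
      apply CV_mult; apply CV_minus; try apply CV_const; apply CV_plus; try apply CV_const;
        apply CV_mult; try apply CV_const; auto. }
  assert (K2 : nsq I (fun a => p a - q a) <= d2).
  { apply Rnot_lt_le; intros C.
    set (L := nsq I (fun a => p a - q a)) in *.
    assert (Hc : Un_cv (fun j => nsq I (fun a => p a - ws j a)) L).
    { apply rsum_cv. intros a Ha. apply CV_mult; apply CV_minus; try apply CV_const; auto. }
    destruct (Hc ((L - d2) / 2)) as [N1 HN1]. lra.
    destruct (archimed_cor1 ((L - d2) / 2)) as [N2 [HN2 HN20]]. lra.
    specialize (HN1 (N1 + N2)%nat ltac:(lia)). unfold R_dist in HN1.
    destruct (Hws (N1 + N2)%nat) as [_ Hb].
    pose proof (inv_S_le N2 (N1 + N2) HN20 ltac:(lia)).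
    apply Rabs_def2 in HN1 as [HA HB].
    set (a1 := / INR (S (N1 + N2))) in *. set (b := / INR N2) in *. lra. }
  assert (K3 : d2 <= nsq I (fun a => p a - q a)).
  { pose proof (K1 (fun _ => 0) 0 H0 ltac:(lra)).
    replace (nsq I (fun a => p a - q a)) with (nsq I (fun a => p a - ((1 - 0) * q a + 0 * 0))); auto.
    unfold nsq, ip. apply rsum_ext; intros; ring. }
  assert (K4 : forall w, W w -> ip I (fun a => p a - q a) (fun a => w a - q a) <= 0).
  { intros w Hw.
    set (X := ip I (fun a => p a - q a) (fun a => w a - q a)).
    set (Y := nsq I (fun a => w a - q a)).
    assert (HY : 0 <= Y) by apply nsq_nonneg.
    assert (Hexp : forall t, nsq I (fun a => p a - ((1 - t) * q a + t * w a)) =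
                             nsq I (fun a => p a - q a) - 2 * t * X + t * t * Y).
    { intros t. unfold X, Y, nsq, ip. rewrite <- rsum_scal, <- (rsum_scal (t * t)), <- rsum_minus, <- rsum_plus.
      apply rsum_ext; intros; ring. }
    apply Rnot_lt_le; intros HX.
    set (t := X / (X + Y)).
    assert (Ht1 : t * (X + Y) = X) by (unfold t; field; lra).
    assert (Ht0 : 0 < t) by (unfold t; apply Rdiv_lt_0_compat; lra).
    assert (t <= 1) by nra.
    pose proof (K1 w t Hw ltac:(lra)) as HK. rewrite Hexp in HK. nra. }
  assert (K5 : ip I (fun a => p a - q a) q = 0).
  { apply Rle_antisym.
    - apply (@Rle_cv_lim (fun j => ip I (fun a => p a - q a) (fun a => 2 * ws j a - q a)) (fun _ => 0) _ 0).
      + intros j. apply K4. destruct (Hws j) as [Wj _].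
        assert (W (fun a => 2 * ws j a)) by (apply Hsc; auto; lra). exact H.
      + replace (ip I (fun a => p a - q a) q) with (ip I (fun a => p a - q a) (fun a => 2 * q a - q a)).
        apply rsum_cv. intros a Ha. apply CV_mult; [apply CV_const|]. apply CV_minus; [|apply CV_const].
        apply CV_mult; [apply CV_const|auto].
        unfold ip; apply rsum_ext; intros; ring.
      + apply CV_const.
    - pose proof (K4 _ H0). unfold ip in *.
      assert (E1 : rsum (fun i => (p i - q i) * (0 - q i)) I = -1 * rsum (fun i => (p i - q i) * q i) I)
        by (rewrite <- rsum_scal; apply rsum_ext; intros; ring).
      lra. }
  exists (fun a => q a - p a). split.
  - assert (ip I (fun a => q a - p a) p = - nsq I (fun a => p a - q a) - ip I (fun a => p a - q a) q).
    { unfold nsq, ip.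
      rewrite (rsum_ext _ (fun i => -1 * ((p i - q i) * (p i - q i)) - (p i - q i) * q i)) by (intros; ring).
      rewrite rsum_minus, rsum_scal. ring. }
    lra.
  - intros w Hw. pose proof (K4 w Hw).
    assert (ip I (fun a => q a - p a) w = - ip I (fun a => p a - q a) (fun a => w a - q a) - ip I (fun a => p a - q a) q).
    { unfold ip.
      rewrite (rsum_ext _ (fun i => -1 * ((p i - q i) * (w i - q i)) - (p i - q i) * q i)) by (intros; ring).
      rewrite rsum_minus, rsum_scal. ring. }
    lra.
Qed.

Lemma CV_div1 (a t : nat -> R) x : Un_cv a x -> Un_cv t 1 -> Un_cv (fun j => a j / t j) x.
Proof.
  intros Ha Ht.
  assert (HD : Un_cv (fun j => a j - t j * x) (x - 1 * x)) by (apply CV_minus; auto; apply CV_mult; auto; apply CV_const).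
  intros eps Heps.
  destruct (Ht (/2)) as [N1 HN1]; [lra|].
  destruct (HD (eps / 2)) as [N2 HN2]; [lra|].
  exists (N1 + N2)%nat. intros j Hj.
  specialize (HN1 j ltac:(lia)). specialize (HN2 j ltac:(lia)). unfold R_dist in *.
  apply Rabs_def2 in HN1 as [A1 A2]. apply Rabs_def2 in HN2 as [B1 B2].
  assert (Htj : 0 < t j) by lra.
  replace (a j / t j - x) with ((a j - t j * x - (x - 1 * x)) / t j) by (field; lra).
  unfold Rdiv. rewrite Rabs_mult, Rabs_inv, (Rabs_pos_eq (t j)) by lra.
  apply (Rmult_lt_reg_r (t j)); auto. rewrite Rmult_assoc, Rinv_l by lra.
  rewrite Rmult_1_r. apply Rabs_def1; nra.
Qed.

Lemma SQCV (u : nat -> R) L : (forall j, (u j - L) * (u j - L) <= / INR (S j)) -> Un_cv u L.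
Proof.
  intros H eps Heps.
  destruct (archimed_cor1 (eps * eps)) as [N [HN HN0]]; [nra|].
  exists N. intros j Hj. unfold R_dist. apply sq_lt_abs; auto.
  pose proof (H j). pose proof (inv_S_le N j HN0 ltac:(lia)).
  set (a1 := / INR (S j)) in *. set (b := / INR N) in *. lra.
Qed.

Definition EV (N : nat) : list mono := map (evec N) (seq 0 N).

Lemma nth_map_seq {A} (f : nat -> A) N s j d : (j < N)%nat -> nth j (map f (seq s N)) d = f (s + j)%nat.
Proof.
  revert s j; induction N; intros s j H; [lia|]. simpl. destruct j. f_equal; lia.
  rewrite IHN by lia. f_equal; lia.
Qed.

Lemma evec_nth N i j : (j < N)%nat -> nth j (evec N i) 0%nat = if Nat.eqb j i then 1%nat else 0%nat.
Proof.
  intros Hj. unfold evec. rewrite nth_map_seq by auto. auto.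
Qed.

Lemma evec_inj N i j : (i < N)%nat -> (j < N)%nat -> evec N i = evec N j -> i = j.
Proof.
  intros Hi Hj E. assert (nth i (evec N i) 0%nat = nth i (evec N j) 0%nat) by (rewrite E; auto).
  rewrite !evec_nth in H by auto. rewrite Nat.eqb_refl in H. destruct (Nat.eqb_spec i j); auto. discriminate.
Qed.

Lemma EV_NoDup N : NoDup (EV N).
Proof.
  unfold EV. generalize (seq_NoDup N 0). assert (Hs : forall i, In i (seq 0 N) -> (i < N)%nat) by (intros i Hi; apply in_seq in Hi; lia).
  revert Hs. generalize (seq 0 N). intros l Hs Hl. induction Hl; simpl; constructor.
  - intros Hin. apply in_map_iff in Hin as [z [E Hz]]. apply evec_inj in E; try (apply Hs; simpl; auto). subst; auto.
  - apply IHHl. intros; apply Hs; simpl; auto.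
Qed.

Lemma mdeg0_repeat a : mdeg a = 0%nat -> a = repeat 0%nat (length a).
Proof. induction a; auto. rewrite mdeg_cons. intros H. simpl. rewrite IHa at 1 by lia. f_equal. lia. Qed.

Lemma evec_tail_zero i s N : (i < s)%nat -> map (fun j => if Nat.eqb j i then 1%nat else 0%nat) (seq s N) = repeat 0%nat N.
Proof.
  revert s; induction N; intros s H; simpl; auto. destruct (Nat.eqb_spec s i); [lia|]. f_equal. apply IHN. lia.
Qed.

Lemma lin_mono_gen a s : mdeg a = 1%nat ->
  exists i, (s <= i < s + length a)%nat /\ a = map (fun j => if Nat.eqb j i then 1%nat else 0%nat) (seq s (length a)).
Proof.
  revert s; induction a as [|x a IH]; intros s H. { unfold mdeg in H; simpl in H; lia. }
  rewrite mdeg_cons in H. destruct x as [|[|x]].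
  - destruct (IH (S s)) as [i [Hi E]]; [lia|]. exists i. simpl. split; [lia|].
    destruct (Nat.eqb_spec s i); [lia|]. f_equal. auto.
  - exists s. simpl. split; [lia|]. rewrite Nat.eqb_refl. f_equal.
    rewrite evec_tail_zero by lia. apply mdeg0_repeat. lia.
  - lia.
Qed.

Lemma lin_mono N a : length a = N -> mdeg a = 1%nat -> In a (EV N).
Proof.
  intros HL Hd. destruct (lin_mono_gen a 0 Hd) as [i [Hi E]]. unfold EV. apply in_map_iff. exists i.
  split. unfold evec. rewrite E, HL. auto. apply in_seq. lia.
Qed.

Lemma meval_evec_lt v s i : (i < s)%nat -> meval (map (fun j => if Nat.eqb j i then 1%nat else 0%nat) (seq s (length v))) v = 1.
Proof.
  revert s; induction v; intros s H; simpl; auto. destruct (Nat.eqb_spec s i); [lia|]. rewrite IHv by lia. simpl. lra.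
Qed.

Lemma meval_evec_gen v s i : (s <= i < s + length v)%nat ->
  meval (map (fun j => if Nat.eqb j i then 1%nat else 0%nat) (seq s (length v))) v = nth (i - s) v 0.
Proof.
  revert s; induction v; intros s H; simpl in *; [lia|]. destruct (Nat.eqb_spec s i).
  - subst. rewrite meval_evec_lt by lia. rewrite Nat.sub_diag. simpl. lra.
  - rewrite IHv by lia. simpl. replace (i - s)%nat with (S (i - S s)) by lia. simpl. lra.
Qed.

Lemma meval_evec v i : (i < length v)%nat -> meval (evec (length v) i) v = nth i v 0.
Proof. intros H. unfold evec. rewrite meval_evec_gen by lia. f_equal; lia. Qed.

Lemma Ly_pvar y N i : Ly y (pvar N i) = y (evec N i).
Proof. unfold Ly, pvar. simpl. ring. Qed.

Lemma lin_supp N l : is_linform N l -> forall a, coef l a <> 0 -> In a (EV N).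
Proof. intros H a Ha. destruct (H a Ha). apply lin_mono; auto. Qed.

Lemma lin_Ly N l y : is_linform N l -> Ly y l = rsum (fun i => coef l (evec N i) * y (evec N i)) (seq 0 N).
Proof.
  intros H. unfold Ly. rewrite (TS l y (EV N)); [|apply EV_NoDup|apply lin_supp; auto].
  unfold EV. rewrite rsum_map. auto.
Qed.

Lemma lin_peval N l v : is_linform N l -> peval l v = rsum (fun i => coef l (evec N i) * meval (evec N i) v) (seq 0 N).
Proof.
  intros H. unfold peval. rewrite (TS l (fun a => meval a v) (EV N)); [|apply EV_NoDup|apply lin_supp; auto].
  unfold EV. rewrite rsum_map. auto.
Qed.

Lemma rsum_seq_S (f : nat -> R) s m : rsum f (seq (S s) m) = rsum (fun i => f (S i)) (seq s m).
Proof. rewrite <- seq_shift, rsum_map. auto. Qed.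

Lemma rsum_combine x z : length x = length z ->
  rsum (fun p => (fst p - snd p) ^ 2) (combine x z) = rsum (fun i => (nth i x 0 - nth i z 0) ^ 2) (seq 0 (length x)).
Proof.
  revert z; induction x; intros z H; destruct z; simpl in *; try discriminate; auto.
  rewrite IHx by lia. rewrite rsum_seq_S. auto.
Qed.

Lemma coord_le_dist x z i : length x = length z -> (i < length x)%nat -> Rabs (nth i x 0 - nth i z 0) <= Defs.dist x z.
Proof.
  intros Hl Hi. unfold Defs.dist. rewrite rsum_combine by auto.
  rewrite <- sqrt_Rsqr_abs. apply sqrt_le_1_alt. rewrite Rsqr_pow2.
  apply (rsum_term_le (fun i0 => (nth i0 x 0 - nth i0 z 0) ^ 2)).
  - intros; apply pow2_ge_0.
  - apply in_seq; lia.
Qed.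

Lemma rsum_abs {A} (f : A -> R) l : Rabs (rsum f l) <= rsum (fun x => Rabs (f x)) l.
Proof.
  induction l; simpl. rewrite Rabs_R0; lra.
  eapply Rle_trans; [apply Rabs_triang|]. lra.
Qed.

Lemma Omega_F n k gs l z : is_linform (S n) l -> in_Omega n k gs z ->
  exists y, Dcond n k gs y /\
    Ly y l = rsum (fun i => coef l (evec (S n) i) * nth i (1 :: z) 0) (seq 0 (S n)).
Proof.
  intros Hl [Lz [y [H0 [Hi [D1 [D2 [D3 D4]]]]]]]. exists y. split; [repeat split; auto|].
  rewrite (lin_Ly (S n) l y Hl). apply rsum_ext. intros i Hin. apply in_seq in Hin. f_equal.
  destruct i as [|i].
  - rewrite <- H0, Ly_pvar. auto.
  - simpl. rewrite <- Hi by lia. rewrite Ly_pvar. auto.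
Qed.

Lemma DIR1 n k gs x : (1 <= k)%nat -> Forall (wf n) gs -> length x = n ->
  in_closure n (in_Omega n k gs) x -> in_TH n k gs x.
Proof.
  intros Hk Wg Lx [_ Hcl]. split; auto. intros l Hl Hlin.
  set (c := fun i => coef l (evec (S n) i)).
  set (F := fun v => rsum (fun i => c i * nth i (1 :: v) 0) (seq 0 (S n))).
  assert (HFx : peval l (1 :: x) = F x).
  { rewrite (lin_peval (S n) l _ Hlin). apply rsum_ext; intros i Hin. apply in_seq in Hin.
    unfold c. f_equal. replace (S n) with (length (1 :: x)) by (simpl; auto). apply meval_evec. simpl; lia. }
  rewrite HFx.
  set (C := rsum (fun i => Rabs (c i)) (seq 0 (S n))).
  assert (HC : 0 <= C) by (apply rsum_nonneg; intros; apply Rabs_pos).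
  assert (Hlip : forall z, length z = n -> F z - F x <= C * Defs.dist x z).
  { intros z Lz. unfold F. rewrite <- rsum_minus.
    eapply Rle_trans; [apply Rle_abs|]. eapply Rle_trans; [apply rsum_abs|].
    unfold C. replace (rsum (fun i => Rabs (c i)) (seq 0 (S n)) * Defs.dist x z) with
      (rsum (fun i => Rabs (c i) * Defs.dist x z) (seq 0 (S n))) by (rewrite rsum_scalr; auto).
    apply rsum_le. intros i Hin. apply in_seq in Hin.
    rewrite <- Rmult_minus_distr_l, Rabs_mult. apply Rmult_le_compat_l; [apply Rabs_pos|].
    destruct i as [|i].
    - simpl. rewrite Rminus_diag, Rabs_R0. unfold Defs.dist. apply sqrt_pos.
    - simpl. rewrite Rabs_minus_sym. apply coord_le_dist; lia. }
  apply Rnot_lt_le. intros Hneg.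
  destruct (Hcl (- F x / (C + 1))) as [z [Hz [Lz Hd]]].
  { apply Rdiv_lt_0_compat; lra. }
  destruct (Omega_F n k gs l z Hlin Hz) as [y [Dy Ey]].
  pose proof (POS n k gs y l Hk Wg Dy Hl) as Hp. rewrite Ey in Hp. fold c in Hp. fold (F z) in Hp.
  pose proof (Hlip z Lz).
  assert (C * Defs.dist x z <= C * (- F x / (C + 1))) by (apply Rmult_le_compat_l; lra).
  assert (C * (- F x / (C + 1)) < - F x).
  { apply (Rmult_lt_reg_r (C + 1)); [lra|]. unfold Rdiv. rewrite Rmult_assoc, (Rmult_assoc (-F x)), Rinv_l by lra. nra. }
  set (tt := C * (- F x / (C + 1))) in *. set (dd := C * Defs.dist x z) in *. change (0 <= F z) in Hp. lra.
Qed.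

Lemma psd_ext I M M' : (forall a b, In a I -> In b I -> M a b = M' a b) -> psd I M -> psd I M'.
Proof.
  intros E H v. specialize (H v). erewrite rsum_ext; [exact H|]. intros a Ha. apply rsum_ext; intros b Hb. rewrite E; auto.
Qed.

Lemma psd_add I M1 M2 : psd I M1 -> psd I M2 -> psd I (fun a b => M1 a b + M2 a b).
Proof.
  intros H1 H2 v. specialize (H1 v). specialize (H2 v). cbv beta.
  assert (E : rsum (fun a => rsum (fun b => v a * (M1 a b + M2 a b) * v b) I) I =
    rsum (fun a => rsum (fun b => v a * M1 a b * v b) I) I + rsum (fun a => rsum (fun b => v a * M2 a b * v b) I) I).
  { rewrite <- rsum_plus. apply rsum_ext; intros a _. rewrite <- rsum_plus. apply rsum_ext; intros; ring. }
  rewrite E. lra.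
Qed.

Lemma psd_scale I M t : 0 <= t -> psd I M -> psd I (fun a b => t * M a b).
Proof.
  intros Ht H v. specialize (H v). cbv beta.
  assert (E : rsum (fun a => rsum (fun b => v a * (t * M a b) * v b) I) I =
    t * rsum (fun a => rsum (fun b => v a * M a b * v b) I) I).
  { rewrite <- rsum_scal. apply rsum_ext; intros a _. rewrite <- rsum_scal. apply rsum_ext; intros; ring. }
  rewrite E. apply Rmult_le_pos; auto.
Qed.

Lemma psd_zero I : psd I (fun _ _ => 0).
Proof. intros v. apply rsum_nonneg; intros; apply rsum_nonneg; intros; lra. Qed.

Lemma locmat_add h y1 y2 a b : locmat h (fun c => y1 c + y2 c) a b = locmat h y1 a b + locmat h y2 a b.
Proof. unfold locmat. rewrite <- rsum_plus. apply rsum_ext; intros; ring. Qed.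

Lemma locmat_scale h y t a b : locmat h (fun c => t * y c) a b = t * locmat h y a b.
Proof. unfold locmat. rewrite <- rsum_scal. apply rsum_ext; intros; ring. Qed.

Lemma locmat_zero h a b : locmat h (fun _ => 0) a b = 0.
Proof. unfold locmat. apply rsum_zero; intros; ring. Qed.

Lemma Dcond_add n k gs y1 y2 : Dcond n k gs y1 -> Dcond n k gs y2 -> Dcond n k gs (fun c => y1 c + y2 c).
Proof.
  intros [A1 [B1 [C1 D1]]] [A2 [B2 [C2 D2]]]. split; [|split; [|split]].
  - eapply psd_ext; [|apply (psd_add _ _ _ A1 A2)]. intros; simpl; rewrite locmat_add; auto.
  - intros a b Ha Hb. rewrite locmat_add, B1, B2; auto; lra.
  - eapply psd_ext; [|apply (psd_add _ _ _ C1 C2)]. intros; unfold momat; auto.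
  - rewrite Forall_forall in *. intros g Hg. eapply psd_ext; [|apply (psd_add _ _ _ (D1 g Hg) (D2 g Hg))].
    intros; simpl; rewrite locmat_add; auto.
Qed.

Lemma Dcond_scale n k gs y t : 0 <= t -> Dcond n k gs y -> Dcond n k gs (fun c => t * y c).
Proof.
  intros Ht [A1 [B1 [C1 D1]]]. split; [|split; [|split]].
  - eapply psd_ext; [|apply (psd_scale _ _ _ Ht A1)]. intros; simpl; rewrite locmat_scale; auto.
  - intros a b Ha Hb. rewrite locmat_scale, B1; auto; lra.
  - eapply psd_ext; [|apply (psd_scale _ _ _ Ht C1)]. intros; unfold momat; auto.
  - rewrite Forall_forall in *. intros g Hg. eapply psd_ext; [|apply (psd_scale _ _ _ Ht (D1 g Hg))].
    intros; simpl; rewrite locmat_scale; auto.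
Qed.

Lemma Dcond_zero n k gs : Dcond n k gs (fun _ => 0).
Proof.
  split; [|split; [|split]].
  - eapply psd_ext; [|apply psd_zero]. intros; simpl; rewrite locmat_zero; auto.
  - intros; apply locmat_zero.
  - eapply psd_ext; [|apply psd_zero]. intros; unfold momat; auto.
  - apply Forall_forall. intros g Hg. eapply psd_ext; [|apply psd_zero]. intros; simpl; rewrite locmat_zero; auto.
Qed.

Definition MM (ss H : list mpoly) : mpoly := concat (map (fun sh : mpoly * mpoly => pmul (fst sh) (snd sh)) (combine ss H)).

Lemma coef_concat_map (F : mpoly * mpoly -> mpoly) l a : coef (concat (map F l)) a = rsum (fun x => coef (F x) a) l.
Proof. unfold coef. rewrite rsum_concat, rsum_map. auto. Qed.

Lemma pmul_app s s' h : pmul (s ++ s') h = pmul s h ++ pmul s' h.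
Proof. unfold pmul. apply flat_map_app. Qed.

Definition zapp (ss ss' : list mpoly) : list mpoly := map (fun p => fst p ++ snd p) (combine ss ss').

Lemma zapp_cons s s' ss ss' : zapp (s :: ss) (s' :: ss') = (s ++ s') :: zapp ss ss'.
Proof. reflexivity. Qed.
Arguments zapp : simpl never.

Lemma coef_MM_zapp ss ss' H a : length ss = length H -> length ss' = length H ->
  coef (MM (zapp ss ss') H) a = coef (MM ss H) a + coef (MM ss' H) a.
Proof.
  unfold MM. revert ss ss'; induction H; intros ss ss' L1 L2; destruct ss, ss'; cbn [length] in *; try discriminate.
  - unfold coef; simpl; lra.
  - rewrite zapp_cons. cbn [combine map concat fst snd]. rewrite !coef_app, pmul_app, coef_app. rewrite IHlist by lia. lra.
Qed.

Lemma Forall2_zapp (P : mpoly -> mpoly -> Prop) ss ss' H :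
  (forall s s' h, P s h -> P s' h -> P (s ++ s') h) ->
  Forall2 P ss H -> Forall2 P ss' H -> Forall2 P (zapp ss ss') H.
Proof.
  intros HP F1. revert ss'. induction F1; intros ss' F2; inversion F2; subst.
  - constructor.
  - rewrite zapp_cons. constructor; auto.
Qed.

Lemma Forall_zapp (P : mpoly -> Prop) ss ss' : (forall s s', P s -> P s' -> P (s ++ s')) ->
  Forall P ss -> Forall P ss' -> Forall P (zapp ss ss').
Proof.
  intros HP F1 F2. unfold zapp. apply Forall_forall. intros x Hx. apply in_map_iff in Hx as [[s s'] [<- Hin]].
  rewrite Forall_forall in F1, F2. simpl. apply HP; [apply F1; eapply in_combine_l|apply F2; eapply in_combine_r]; eauto.
Qed.

Lemma sos_app N s s' : is_sos N s -> is_sos N s' -> is_sos N (s ++ s').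
Proof.
  intros [qs [W E]] [qs' [W' E']]. exists (qs ++ qs'). split. apply Forall_app; auto.
  intros a. rewrite flat_map_app, !coef_app, E, E'. auto.
Qed.

Lemma deg_le_app D s s' : deg_le D s -> deg_le D s' -> deg_le D (s ++ s').
Proof.
  intros H1 H2 a Ha. rewrite coef_app in Ha. destruct (Req_dec (coef s a) 0) as [E|E]; [apply H2|apply H1; auto].
  rewrite E in Ha; lra.
Qed.

Lemma deg_le_pmul_app D s s' h : deg_le D (pmul s h) -> deg_le D (pmul s' h) -> deg_le D (pmul (s ++ s') h).
Proof. intros; rewrite pmul_app; apply deg_le_app; auto. Qed.

Lemma Qk_add N k H f g : in_Qk N k H f -> in_Qk N k H g -> in_Qk N k H (f ++ g).
Proof.
  intros [s0 [ss [S0 [D0 [Fs [F2 E]]]]]] [s0' [ss' [S0' [D0' [Fs' [F2' E']]]]]].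
  exists (s0 ++ s0'), (zapp ss ss'). repeat split.
  - apply sos_app; auto.
  - apply deg_le_app; auto.
  - apply Forall_zapp; auto. apply sos_app.
  - apply Forall2_zapp; auto. apply deg_le_pmul_app.
  - intros a. rewrite coef_app, E, E', !coef_app. fold (MM ss H) (MM ss' H) (MM (zapp ss ss') H).
    rewrite coef_MM_zapp; [lra| |]; eapply Forall2_length; eauto.
Qed.

Lemma coef_pmul_scl_l a p r c : coef (pmul (pscale a p) r) c = a * coef (pmul p r) c.
Proof.
  rewrite !coef_pmul_raw. unfold pscale. rewrite rsum_map, <- rsum_scal. apply rsum_ext; intros; simpl; ring.
Qed.

Lemma coef_pmul_scl_r a p r c : coef (pmul p (pscale a r)) c = a * coef (pmul p r) c.
Proof.
  rewrite !coef_pmul_raw. rewrite <- rsum_scal. apply rsum_ext; intros t _. unfold pscale. rewrite rsum_map.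
  transitivity (snd t * (a * rsum (fun s => snd s * indb (eqm (vadd (fst t) (fst s)) c)) r)); [|ring].
  f_equal. rewrite <- rsum_scal. apply rsum_ext; intros; simpl; ring.
Qed.

Lemma sos_scale N t s : 0 <= t -> is_sos N s -> is_sos N (pscale t s).
Proof.
  intros Ht [qs [W E]]. exists (map (pscale (sqrt t)) qs). split.
  - rewrite Forall_forall in *. intros q Hq. apply in_map_iff in Hq as [q' [<- Hq']].
    specialize (W q' Hq'). unfold wf, pscale in *. rewrite Forall_forall in *. intros x Hx.
    apply in_map_iff in Hx as [x' [<- Hx']]. simpl; auto.
  - intros a. rewrite coef_pscale, E. rewrite !coef_flat_map, rsum_map, <- rsum_scal. apply rsum_ext; intros q _.
    rewrite coef_pmul_scl_l, coef_pmul_scl_r. rewrite <- Rmult_assoc, sqrt_sqrt; auto.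
Qed.

Lemma coef_MM_scale t ss H a : coef (MM (map (pscale t) ss) H) a = t * coef (MM ss H) a.
Proof.
  unfold MM. revert ss; induction H; intros ss; destruct ss; simpl; try (unfold coef; simpl; lra).
  rewrite !coef_app, coef_pmul_scl_l, IHlist. lra.
Qed.

Lemma Qk_scale N k H t f : 0 <= t -> in_Qk N k H f -> in_Qk N k H (pscale t f).
Proof.
  intros Ht [s0 [ss [S0 [D0 [Fs [F2 E]]]]]].
  exists (pscale t s0), (map (pscale t) ss). repeat split.
  - apply sos_scale; auto.
  - intros a Ha. rewrite coef_pscale in Ha. apply D0. intros C; rewrite C in Ha; lra.
  - rewrite Forall_forall in *. intros s Hs. apply in_map_iff in Hs as [s' [<- Hs']]. apply sos_scale; auto.
  - clear -F2. induction F2; simpl; constructor; auto. intros a Ha. rewrite coef_pmul_scl_l in Ha.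
    apply H. intros C; rewrite C in Ha; lra.
  - intros a. rewrite coef_pscale, E, !coef_app, coef_pscale. fold (MM ss H) (MM (map (pscale t) ss) H).
    rewrite coef_MM_scale. lra.
Qed.

Lemma Qk_nil N k H : in_Qk N k H [].
Proof. apply Qk_sos0. apply sos_nil. intros a Ha; exfalso; apply Ha; reflexivity. Qed.

Lemma Qk_supp N k H f : (forall h, In h H -> supp_len N h) -> in_Qk N k H f ->
  forall a, coef f a <> 0 -> In a (monos N (2 * k)).
Proof.
  intros HH [s0 [ss [[qs0 [W0 E0]] [D0 [Fs [F2 E]]]]]] a Ha.
  apply monos_In. rewrite E, coef_app, coef_concat_map in Ha.
  destruct (Req_dec (coef s0 a) 0) as [Z|Z].
  - rewrite Z, Rplus_0_l in Ha. apply rsum_nz in Ha as [[s h] [Hin Hc]]. simpl in Hc.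
    destruct (Forall2_combine _ _ _ _ _ F2 Hin) as [Hd [Hs Hh]]. split; [|apply Hd; auto].
    rewrite Forall_forall in Fs. destruct (Fs s Hs) as [qs [W E1]].
    apply (supp_len_pmul N s h); auto.
    + intros b Hb. rewrite E1 in Hb. apply (sos_supp_len N qs W); auto.
  - split; [|apply D0; auto]. rewrite E0 in Z. apply (sos_supp_len N qs0 W0); auto.
Qed.

Lemma Gtilde_supp n gs : Forall (wf n) gs -> forall h, In h (Gtilde n gs) -> supp_len (S n) h.
Proof.
  intros Wg h Hh. apply Gtilde_In in Hh as [[g [Hg Eh]] | [Eh | [Eh | Eh]]]; subst h.
  - rewrite Forall_forall in Wg. apply homog_supp_len; auto.
  - apply pvar_supp.
  - apply nrm1_supp.
  - apply mnrm1_supp.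
Qed.

Lemma lin_in_IM N k l : (1 <= k)%nat -> is_linform N l -> forall a, coef l a <> 0 -> In a (monos N (2 * k)).
Proof. intros Hk Hl a Ha. destruct (Hl a Ha). apply monos_In. split; auto. lia. Qed.

Lemma Qk_far n k gs l : (1 <= k)%nat -> Forall (wf n) gs -> Qk_closed (S n) k (Gtilde n gs) ->
  is_linform (S n) l -> ~ in_Qk (S n) k (Gtilde n gs) l ->
  exists dl, 0 < dl /\ forall f, in_Qk (S n) k (Gtilde n gs) f ->
    dl <= nsq (monos (S n) (2 * k)) (fun a => coef l a - coef f a).
Proof.
  intros Hk Wg Hcl Hl Hnot. apply NNPP. intros C. apply Hnot.
  assert (Hex : forall j : nat, exists f, in_Qk (S n) k (Gtilde n gs) f /\
      nsq (monos (S n) (2 * k)) (fun a => coef l a - coef f a) < / INR (S j)).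
  { intros j. apply NNPP. intros C'. apply C. exists (/ INR (S j)). split.
    - apply Rinv_0_lt_compat, lt_0_INR; lia.
    - intros f Hf. apply Rnot_lt_le. intros C''. apply C'. eauto. }
  set (fs := fun j => proj1_sig (constructive_indefinite_description _ (Hex j))).
  assert (Hfs : forall j, in_Qk (S n) k (Gtilde n gs) (fs j) /\
      nsq (monos (S n) (2 * k)) (fun a => coef l a - coef (fs j) a) < / INR (S j)).
  { intros j. exact (proj2_sig (constructive_indefinite_description _ (Hex j))). }
  clearbody fs.
  apply (Hcl fs l). { intros j; apply Hfs. }
  intros a. destruct (classic (In a (monos (S n) (2 * k)))) as [Ha|Ha].
  - apply SQCV. intros j. destruct (Hfs j) as [_ Hj].
    assert ((coef l a - coef (fs j) a) * (coef l a - coef (fs j) a) <= nsq (monos (S n) (2 * k)) (fun a => coef l a - coef (fs j) a)).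
    { apply (rsum_term_le (fun a0 => (coef l a0 - coef (fs j) a0) * (coef l a0 - coef (fs j) a0))); auto.
      intros; apply Rle_0_sqr. }
    set (b := / INR (S j)) in *. nra.
  - assert (E1 : coef l a = 0) by (apply NNPP; intros C1; apply Ha; apply (lin_in_IM _ k l Hk Hl); auto).
    assert (E2 : forall j, coef (fs j) a = 0).
    { intros j. apply NNPP; intros C1. apply Ha. apply (Qk_supp (S n) k (Gtilde n gs) (fs j)); auto.
      apply Gtilde_supp; auto. apply Hfs. }
    rewrite E1. intros eps Heps. exists 0%nat. intros j _. unfold R_dist. rewrite E2, Rminus_diag, Rabs_R0; auto.
Qed.

Definition linc (N : nat) (c : nat -> R) : mpoly := map (fun i => (evec N i, c i)) (seq 0 N).

Lemma linc_lin N c : is_linform N (linc N c).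
Proof.
  intros a Ha. apply coef_nz_in in Ha. unfold linc in Ha. rewrite map_map in Ha. apply in_map_iff in Ha as [i [<- Hi]].
  apply in_seq in Hi. simpl. split. apply evec_length. apply mdeg_evec; lia.
Qed.

Lemma Ly_linc y N c : Ly y (linc N c) = rsum (fun i => c i * y (evec N i)) (seq 0 N).
Proof. unfold Ly, linc. rewrite rsum_map. auto. Qed.

Lemma peval_linc v N c : peval (linc N c) v = rsum (fun i => c i * meval (evec N i) v) (seq 0 N).
Proof. unfold peval, linc. rewrite rsum_map. auto. Qed.

Lemma L_in_Qk n k gs c : (1 <= k)%nat -> Forall (wf n) gs ->
  Forall (fun g => (halfceil (pdeg g) <= k)%nat) gs -> Qk_closed (S n) k (Gtilde n gs) ->
  (forall y, Dcond n k gs y -> 0 <= rsum (fun i => c i * y (evec (S n) i)) (seq 0 (S n))) ->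
  in_Qk (S n) k (Gtilde n gs) (linc (S n) c).
Proof.
  intros Hk Wg Hhc Hcl Hc. apply NNPP. intros Hnot.
  set (l := linc (S n) c) in *.
  set (IM := monos (S n) (2 * k)).
  destruct (Qk_far n k gs l Hk Wg Hcl (linc_lin _ _) Hnot) as [dl [Hdl Hfar]].
  set (W' := fun v : mono -> R => exists f, in_Qk (S n) k (Gtilde n gs) f /\ forall a, In a IM -> v a = coef f a).
  destruct (SEP IM W' (fun a => coef l a) dl) as [d [Hd1 Hd2]].
  - intros u v [f [Hf Ef]] [g [Hg Eg]]. exists (f ++ g). split. apply Qk_add; auto.
    intros a Ha. rewrite coef_app, Ef, Eg; auto.
  - intros t u Ht [f [Hf Ef]]. exists (pscale t f). split. apply Qk_scale; auto.
    intros a Ha. rewrite coef_pscale, Ef; auto.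
  - exists []. split. apply Qk_nil. intros; rewrite coef_nil; auto.
  - auto.
  - intros w [f [Hf Ef]]. specialize (Hfar f Hf). unfold nsq, ip in *.
    erewrite rsum_ext; [exact Hfar|]. intros a Ha. cbv beta. rewrite Ef; auto.
  - set (y := d).
    assert (HLy : forall f, (forall a, coef f a <> 0 -> In a IM) -> Ly y f = ip IM d (fun a => coef f a)).
    { intros f Hs. unfold Ly. rewrite (TS f y IM); auto. unfold ip. apply rsum_ext; intros; unfold y; ring.
      apply NoDup_monos. }
    assert (Dy : Dcond n k gs y).
    { apply RIESZ2; auto. intros f Hf. rewrite HLy.
      - apply Hd2. exists f; split; auto.
      - intros a Ha. apply (Qk_supp (S n) k (Gtilde n gs) f); auto. apply Gtilde_supp; auto. }
    specialize (Hc y Dy). rewrite <- Ly_linc in Hc. fold l in Hc.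
    rewrite HLy in Hc. lra. apply lin_in_IM; auto. apply linc_lin.
Qed.

Lemma CV_ext (u v : nat -> R) l : (forall j, u j = v j) -> Un_cv u l -> Un_cv v l.
Proof. intros E H eps He. destruct (H eps He) as [N HN]. exists N. intros j Hj. rewrite <- E. auto. Qed.

Lemma DIR2 n k gs x : (1 <= k)%nat -> Forall (wf n) gs ->
  Forall (fun g => (halfceil (pdeg g) <= k)%nat) gs -> Qk_closed (S n) k (Gtilde n gs) ->
  length x = n -> in_TH n k gs x -> in_closure n (in_Omega n k gs) x.
Proof.
  intros Hk Wg Hhc Hcl Lx [_ HTH].
  set (NN := S n). set (I := seq 0 NN).
  set (p := fun i => nth i (1 :: x) 0).
  set (W := fun w : nat -> R => exists y, Dcond n k gs y /\ forall i, w i = y (evec NN i)).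
  assert (APPROX : forall dl, 0 < dl -> exists y, Dcond n k gs y /\ nsq I (fun i => p i - y (evec NN i)) < dl).
  { intros dl Hdl. apply NNPP. intros C.
    destruct (SEP I W p dl) as [c [Hc1 Hc2]].
    - intros u v [y1 [D1 E1]] [y2 [D2 E2]]. exists (fun a => y1 a + y2 a). split. apply Dcond_add; auto.
      intros i. rewrite E1, E2. auto.
    - intros t u Ht [y1 [D1 E1]]. exists (fun a => t * y1 a). split. apply Dcond_scale; auto.
      intros i. rewrite E1. auto.
    - exists (fun _ => 0). split. apply Dcond_zero. auto.
    - auto.
    - intros w [y [Dy Ew]]. apply Rnot_lt_le. intros C'. apply C. exists y. split; auto.
      unfold nsq, ip in *. erewrite rsum_ext; [exact C'|]. intros i _. cbv beta. rewrite Ew. auto.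
    - assert (Hq : in_Qk (S n) k (Gtilde n gs) (linc (S n) c)).
      { apply L_in_Qk; auto. intros y Dy. apply (Hc2 (fun i => y (evec NN i))). exists y; split; auto. }
      pose proof (HTH _ Hq (linc_lin _ _)) as Hp.
      rewrite peval_linc in Hp.
      assert (rsum (fun i => c i * meval (evec (S n) i) (1 :: x)) (seq 0 (S n)) = ip I c p).
      { unfold ip, I, NN. apply rsum_ext. intros i Hi. apply in_seq in Hi. unfold p. f_equal.
        replace (S n) with (length (1 :: x)) by (simpl; auto). apply meval_evec. simpl; lia. }
      lra. }
  assert (Hseq : forall j : nat, exists y, Dcond n k gs y /\ nsq I (fun i => p i - y (evec NN i)) < / INR (S j)).
  { intros j. apply APPROX. apply Rinv_0_lt_compat, lt_0_INR; lia. }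
  set (ys := fun j => proj1_sig (constructive_indefinite_description _ (Hseq j))).
  assert (Hys : forall j, Dcond n k gs (ys j) /\ nsq I (fun i => p i - ys j (evec NN i)) < / INR (S j)).
  { intros j. exact (proj2_sig (constructive_indefinite_description _ (Hseq j))). }
  clearbody ys.
  assert (Hcv : forall i, (i < NN)%nat -> Un_cv (fun j => ys j (evec NN i)) (p i)).
  { intros i Hi. apply SQCV. intros j. destruct (Hys j) as [_ Hj].
    assert ((p i - ys j (evec NN i)) * (p i - ys j (evec NN i)) <= nsq I (fun i => p i - ys j (evec NN i))).
    { apply (rsum_term_le (fun i0 => (p i0 - ys j (evec NN i0)) * (p i0 - ys j (evec NN i0)))).
      intros; apply Rle_0_sqr. unfold I; apply in_seq; lia. }
    set (b := / INR (S j)) in *. nra. }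
  set (z := fun j => map (fun i => ys j (evec NN (S i)) / ys j (evec NN 0)) (seq 0 n)).
  assert (Lz : forall j, length (z j) = n) by (intros j; unfold z; rewrite length_map, length_seq; auto).
  set (Sd := fun j => rsum (fun i => (nth i x 0 - nth i (z j) 0) ^ 2) (seq 0 n)).
  assert (HSd : Un_cv Sd 0).
  { replace 0 with (rsum (fun i => (nth i x 0 - nth i x 0) ^ 2) (seq 0 n)).
    2:{ apply rsum_zero; intros; ring. }
    apply rsum_cv. intros i Hi. apply in_seq in Hi.
    apply (CV_ext (fun j => (nth i x 0 - ys j (evec NN (S i)) / ys j (evec NN 0)) * (nth i x 0 - ys j (evec NN (S i)) / ys j (evec NN 0)))).
    { intros j. unfold z. rewrite nth_map_seq by lia. simpl. ring. }
    replace ((nth i x 0 - nth i x 0) ^ 2) with ((nth i x 0 - nth i x 0) * (nth i x 0 - nth i x 0)) by ring.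
    apply CV_mult; apply CV_minus; try apply CV_const; apply CV_div1.
    all: first [apply (Hcv (S i)); unfold NN; lia | apply (Hcv 0%nat); unfold NN; lia]. }
  split; auto. intros eps Heps.
  destruct (HSd (eps * eps)) as [N1 HN1]; [nra|].
  destruct (Hcv 0%nat ltac:(unfold NN; lia) (/ 2)) as [N2 HN2]; [lra|].
  set (j := (N1 + N2)%nat).
  specialize (HN1 j ltac:(unfold j; lia)). specialize (HN2 j ltac:(unfold j; lia)).
  unfold R_dist in HN1, HN2. apply Rabs_def2 in HN2 as [A1 A2]. unfold p in A1, A2. simpl in A1, A2.
  set (t := ys j (evec NN 0)) in *.
  assert (Ht : 0 < t) by lra.
  destruct (Hys j) as [Dj _].
  exists (z j). split; [|split; auto].
  - split; auto. exists (fun a => / t * ys j a).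
    destruct (Dcond_scale n k gs (ys j) (/ t) ltac:(left; apply Rinv_0_lt_compat; auto) Dj) as [D1 [D2 [D3 D4]]].
    split; [|split; [|split; [|split; [|split]]]]; auto.
    + rewrite Ly_pvar. fold NN. fold t. field. lra.
    + intros i Hi. rewrite Ly_pvar. unfold z. rewrite nth_map_seq by auto. fold NN. fold t. simpl. unfold Rdiv. ring.
  - unfold Defs.dist. rewrite rsum_combine by (rewrite Lz; auto). rewrite Lx.
    rewrite <- (sqrt_pow2 eps) by lra. apply sqrt_lt_1_alt. split.
    + apply rsum_nonneg; intros; apply pow2_ge_0.
    + fold (Sd j). rewrite Rminus_0_r in HN1. apply Rabs_def2 in HN1 as [B1 B2]. simpl. lra.
Qed.

Theorem mainTheorem13 (n k : nat) (gs : list mpoly) :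
  Forall (wf n) gs ->
  (exists x, in_S n gs x) ->
  (1 <= k)%nat ->
  Forall (fun g => (halfceil (pdeg g) <= k)%nat) gs ->
  Qk_closed (S n) k (Gtilde n gs) ->
  forall x : list R, length x = n ->
    (in_TH n k gs x <-> in_closure n (in_Omega n k gs) x).
Proof.
  intros Wg _ Hk Hhc Hcl x Lx. split.
  - apply DIR2; auto.
  - apply DIR1; auto.
Qed.
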